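(* Let $H$ and $K$ be arbitrary groups, and let $A\le H$ and $B\le K$ be isomorphic subgroups. Let $G=H\ast_{A=B}K$ be the amalgamated free product (amalgamating $A$ with $B$ via a fixed isomorphism). Then: (1) $G$ is weakly hyperbolic relative to $\{H,K\}$. (2) If $H$ is weakly hyperbolic relative to $\{A\}$ and $K$ is weakly hyperbolic relative to $\{B\}$, then $G$ is weakly hyperbolic relative to $\{A\}$.
   Context: Let $G$ be a group and $\mathcal H=\{H_1,\ldots,H_m\}$ a collection of subgroups of $G$. A subset $X\subset G$ is a relative generating set of $G$ with respect to $\mathcal H$ if $G$ is generated by $X\cup H_1\cup\cdots\cup H_m$. The relative Cayley graph of $G$ with respect to $\mathcal H$ (and $X$) is the Cayley graph of $G$ with respect to the generating set $X\cup H_1\cup\cdots\cup H_m$, with the combinatorial metric (every edge has length 1). $G$ is weakly hyperbolic relative to $\mathcal H$ if there exists a finite relative generating set $X$ of $G$ with respect to $\mathcal H$ such that the corresponding relative Cayley graph is a hyperbolic metric space. *)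

(* Defs.v *)
From Stdlib Require Import ZArith List.
Import ListNotations.

Record group := Group {
  carrier :> Type;
  gmul : carrier -> carrier -> carrier;
  gone : carrier;
  ginv : carrier -> carrier;
  gmulA : forall x y z, gmul x (gmul y z) = gmul (gmul x y) z;
  gmul1l : forall x, gmul gone x = x;
  gmul1r : forall x, gmul x gone = x;
  gmulVl : forall x, gmul (ginv x) x = gone;
  gmulVr : forall x, gmul x (ginv x) = gone }.

Arguments gmul {g}.
Arguments gone {g}.
Arguments ginv {g}.

Definition is_subgroup {G : group} (A : G -> Prop) : Prop :=
  A gone /\ (forall x y, A x -> A y -> A (gmul x y)) /\ (forall x, A x -> A (ginv x)).

Definition is_hom {G L : group} (f : G -> L) : Prop :=
  forall x y, f (gmul x y) = gmul (f x) (f y).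

Definition is_iso_on {H K : group} (A : H -> Prop) (B : K -> Prop) (phi : H -> K) : Prop :=
  (forall a, A a -> B (phi a)) /\
  (forall a a', A a -> A a' -> phi (gmul a a') = gmul (phi a) (phi a')) /\
  (forall a a', A a -> A a' -> phi a = phi a' -> a = a') /\
  (forall b, B b -> exists a, A a /\ phi a = b).

(** [G] with [iH], [iK] is the amalgamated free product H *_{A = B} K
    (amalgamation via phi), characterised by its universal property
    (the pushout of H <- A -> K in the category of groups). *)
Definition is_amalgam {H K G : group} (A : H -> Prop) (phi : H -> K)
    (iH : H -> G) (iK : K -> G) : Prop :=
  is_hom iH /\ is_hom iK /\
  (forall a, A a -> iH a = iK (phi a)) /\
  (forall (L : group) (f : H -> L) (g : K -> L),
      is_hom f -> is_hom g -> (forall a, A a -> f a = g (phi a)) ->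
      exists u : G -> L, is_hom u /\ (forall h, u (iH h) = f h) /\
        (forall k, u (iK k) = g k) /\
        (forall v : G -> L, is_hom v -> (forall h, v (iH h) = f h) ->
            (forall k, v (iK k) = g k) -> forall x, v x = u x)).

Definition word_in {G : group} (S : G -> Prop) (l : list G) : Prop :=
  Forall (fun x => S x \/ S (ginv x)) l.

Definition word_prod {G : group} (l : list G) : G := fold_right gmul gone l.

Definition generates {G : group} (S : G -> Prop) : Prop :=
  forall g : G, exists l, word_in S l /\ word_prod l = g.

(** [d] is the combinatorial (word) metric of the Cayley graph of G w.r.t. S,
    restricted to vertices: d g h <= n iff g^-1 h is a product of at most n
    letters from S ∪ S^-1. *)
Definition word_metric {G : group} (S : G -> Prop) (d : G -> G -> nat) : Prop :=
  forall g h n, d g h <= n <->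
    exists l, word_in S l /\ length l <= n /\ word_prod l = gmul (ginv g) h.

(** Twice the Gromov product (x|y)_w. *)
Definition gromov2 {T : Type} (d : T -> T -> nat) (x y w : T) : Z :=
  (Z.of_nat (d x w) + Z.of_nat (d y w) - Z.of_nat (d x y))%Z.

Definition gromov_hyperbolic {T : Type} (d : T -> T -> nat) : Prop :=
  exists delta : nat, forall x y z w : T,
    (Z.min (gromov2 d x z w) (gromov2 d y z w) - Z.of_nat delta <= gromov2 d x y w)%Z.

Definition weakly_hyperbolic (G : group) (Hs : list (G -> Prop)) : Prop :=
  exists X : list G,
    let S := fun x : G => In x X \/ Exists (fun P : G -> Prop => P x) Hs in
    generates S /\ exists d : G -> G -> nat, word_metric S d /\ gromov_hyperbolic d.

Definition image {H G : group} (f : H -> G) (P : H -> Prop) : G -> Prop :=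
  fun g => exists h, P h /\ f h = g.

(* Main.v *)
Require Import Defs.
From Stdlib Require Import List.
Import ListNotations.
From Stdlib Require Import Lia ZArith.
From Stdlib Require Import ClassicalEpsilon ProofIrrelevance FunctionalExtensionality PropExtensionality Classical.

Module P1.

Section GroupLemmas.
Variable G : group.
Implicit Types x y z : G.

Lemma gmul_cancel_l x y z : gmul x y = gmul x z -> y = z.
Proof. intro E. rewrite <- (gmul1l G y), <- (gmul1l G z), <- (gmulVl G x), <- !gmulA, E. reflexivity. Qed.

Lemma gmul_cancel_r x y z : gmul y x = gmul z x -> y = z.
Proof. intro E. rewrite <- (gmul1r G y), <- (gmul1r G z), <- (gmulVr G x), !gmulA, E. reflexivity. Qed.

Lemma ginv_ginv x : ginv (ginv x) = x.
Proof. apply (gmul_cancel_l (ginv x)). rewrite gmulVr, gmulVl. reflexivity. Qed.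

Lemma ginv_mul x y : ginv (gmul x y) = gmul (ginv y) (ginv x).
Proof. apply (gmul_cancel_l (gmul x y)). rewrite gmulVr, <- gmulA, (gmulA _ y), gmulVr, gmul1l, gmulVr. reflexivity. Qed.

Lemma ginv_one : ginv (@gone G) = gone.
Proof. rewrite <- (gmul1l G (ginv gone)). apply gmulVr. Qed.

Lemma mulKV x y : gmul (ginv x) (gmul x y) = y.
Proof. rewrite gmulA, gmulVl, gmul1l. reflexivity. Qed.
Lemma mulVK x y : gmul x (gmul (ginv x) y) = y.
Proof. rewrite gmulA, gmulVr, gmul1l. reflexivity. Qed.
Lemma mulKr x y : gmul (gmul x y) (ginv y) = x.
Proof. rewrite <- gmulA, gmulVr, gmul1r. reflexivity. Qed.
Lemma mulVKr x y : gmul (gmul x (ginv y)) y = x.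
Proof. rewrite <- gmulA, gmulVl, gmul1r. reflexivity. Qed.

Lemma inv_eq_one x : gmul (ginv x) x = gone. Proof. apply gmulVl. Qed.

Lemma eq_of_inv_one x y : gmul (ginv x) y = gone -> x = y.
Proof. intro E. apply (gmul_cancel_l (ginv x)). rewrite E, gmulVl. reflexivity. Qed.

Lemma word_prod_app (l1 l2 : list G) : word_prod (l1 ++ l2) = gmul (word_prod l1) (word_prod l2).
Proof. induction l1; simpl. now rewrite gmul1l. rewrite IHl1, gmulA. reflexivity. Qed.

End GroupLemmas.

Lemma hom_one {G L : group} (f : G -> L) : is_hom f -> f gone = gone.
Proof. intro Hf. apply (gmul_cancel_l _ (f gone)). rewrite <- Hf, !gmul1r. reflexivity. Qed.

Lemma hom_inv {G L : group} (f : G -> L) x : is_hom f -> f (ginv x) = ginv (f x).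
Proof. intro Hf. apply (gmul_cancel_l _ (f x)). rewrite <- Hf, !gmulVr. apply hom_one; auto. Qed.

Lemma subgroup_one_inv {G : group} (A : G -> Prop) x : is_subgroup A -> A (ginv x) -> A x.
Proof. intros (H1 & H2 & H3) Hx. rewrite <- (ginv_ginv G x). auto. Qed.

Section WordMetric.
Variable G : group.
Variable S : G -> Prop.
Variable d : G -> G -> nat.
Hypothesis Hd : word_metric S d.

Lemma wm_le x y l : word_in S l -> word_prod l = gmul (ginv x) y -> d x y <= length l.
Proof. intros. apply Hd. exists l. auto. Qed.

Lemma wm_ex x y : exists l, word_in S l /\ length l <= d x y /\ word_prod l = gmul (ginv x) y.
Proof. apply Hd. lia. Qed.

Lemma wm_refl x : d x x = 0.
Proof. assert (d x x <= 0). { apply (wm_le x x []). constructor. simpl. rewrite gmulVl. auto. } lia. Qed.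

Lemma wm_tri x y z : d x z <= d x y + d y z.
Proof.
  destruct (wm_ex x y) as (l1 & W1 & L1 & P1). destruct (wm_ex y z) as (l2 & W2 & L2 & P2).
  assert (d x z <= length (l1 ++ l2)).
  { apply wm_le. apply Forall_app; auto. rewrite word_prod_app, P1, P2, <- gmulA, mulVK. auto. }
  rewrite length_app in H. lia.
Qed.

Lemma word_in_inv l : word_in S l -> word_in S (rev (map ginv l)).
Proof.
  intro W. unfold word_in in *. apply Forall_rev. apply Forall_map.
  eapply Forall_impl; [|exact W]. simpl. intros a [Ha|Ha]; [right; now rewrite ginv_ginv|left; auto].
Qed.

Lemma word_prod_inv (l : list G) : word_prod (rev (map ginv l)) = ginv (word_prod l).
Proof. induction l; simpl. now rewrite ginv_one. rewrite word_prod_app, IHl, ginv_mul. simpl. rewrite gmul1r. auto. Qed.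

Lemma wm_sym_le x y : d y x <= d x y.
Proof.
  destruct (wm_ex x y) as (l & W & L & P).
  assert (d y x <= length (rev (map ginv l))).
  { apply wm_le. now apply word_in_inv. rewrite word_prod_inv, P, ginv_mul, ginv_ginv. auto. }
  rewrite length_rev, length_map in H. lia.
Qed.

Lemma wm_sym x y : d x y = d y x.
Proof. pose proof (wm_sym_le x y). pose proof (wm_sym_le y x). lia. Qed.

Lemma wm_letter x a : S a \/ S (ginv a) -> d x (gmul x a) <= 1.
Proof. intro Ha. apply (wm_le _ _ [a]). constructor; auto. simpl. rewrite gmul1r, mulKV. auto. Qed.

Lemma wm_dep x y x' y' : gmul (ginv x) y = gmul (ginv x') y' -> d x y = d x' y'.
Proof.
  intro E. destruct (wm_ex x y) as (l & W & L & P). destruct (wm_ex x' y') as (l' & W' & L' & P').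
  assert (d x' y' <= length l) by (apply wm_le; congruence).
  assert (d x y <= length l') by (apply wm_le; congruence). lia.
Qed.

Lemma wm_transl g x y : d (gmul g x) (gmul g y) = d x y.
Proof. apply wm_dep. rewrite ginv_mul, <- gmulA, mulKV. auto. Qed.

End WordMetric.

Lemma wm_ext {G : group} (S S' : G -> Prop) d : (forall a, S a <-> S' a) -> word_metric S d -> word_metric S' d.
Proof.
  intros E Hd g h n. pose proof (Hd g h n) as Hn.
  assert (Hw : forall l, word_in S l <-> word_in S' l).
  { intro l. unfold word_in. split; intro W; eapply Forall_impl; try exact W; simpl; intros a [Ha|Ha]; firstorder. }
  rewrite Hn. split; intros (l & W & R); exists l; split; auto; apply Hw; auto.
Qed.

Definition FPs {T} (d : T -> T -> nat) (delta : nat) (x y z w : T) : Prop :=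
  let a := d x y + d z w in let b := d x z + d y w in let c := d x w + d y z in
  a <= Nat.max b c + delta /\ b <= Nat.max a c + delta /\ c <= Nat.max a b + delta.

Section FPsLemmas.
Context {T : Type} (d : T -> T -> nat) (Hs : forall x y, d x y = d y x).
Lemma FPs_12 dl x y z w : FPs d dl x y z w -> FPs d dl y x z w.
Proof. unfold FPs. rewrite (Hs y x), (Hs y z), (Hs y w), (Hs x z), (Hs x w). lia. Qed.
Lemma FPs_23 dl x y z w : FPs d dl x y z w -> FPs d dl x z y w.
Proof. unfold FPs. rewrite (Hs z y). lia. Qed.
Lemma FPs_34 dl x y z w : FPs d dl x y z w -> FPs d dl x y w z.
Proof. unfold FPs. rewrite (Hs w z). lia. Qed.
Lemma FPs_mono dl dl' x y z w : dl <= dl' -> FPs d dl x y z w -> FPs d dl' x y z w.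
Proof. unfold FPs. lia. Qed.

Lemma FPs_gromov dl : (forall x y z w, FPs d dl x y z w) -> gromov_hyperbolic d.
Proof.
  intro H. exists dl. intros x y z w. destruct (H x y z w) as (H1 & H2 & H3).
  unfold gromov2. rewrite (Hs y w) in *. rewrite (Hs x w) in *. lia.
Qed.

Lemma gromov_FPs : gromov_hyperbolic d -> exists dl, forall x y z w, FPs d dl x y z w.
Proof.
  intros [dl H]. exists dl. intros x y z w. unfold FPs.
  pose proof (H x y z w) as A1. pose proof (H x z y w) as A2. pose proof (H y z x w) as A3.
  unfold gromov2 in *. rewrite ?(Hs w x), ?(Hs w y), ?(Hs w z), ?(Hs z x), ?(Hs z y), ?(Hs y x) in *.
  lia.
Qed.
End FPsLemmas.

End P1.
Import P1.

Module P2.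

Section Reps.
Variable G : group.
Variable A : G -> Prop.
Hypothesis HA : is_subgroup A.

Definition rep (h : G) : G :=
  if excluded_middle_informative (A h) then gone
  else epsilon (inhabits gone) (fun t => A (gmul (ginv h) t)).

Lemma sg1 : A gone. Proof. apply HA. Qed.
Lemma sgM x y : A x -> A y -> A (gmul x y). Proof. apply HA. Qed.
Lemma sgV x : A x -> A (ginv x). Proof. apply HA. Qed.
Lemma sgV' x : A (ginv x) -> A x. Proof. intro. rewrite <- (ginv_ginv G x). now apply sgV. Qed.

Lemma rep_spec h : A (gmul (ginv h) (rep h)).
Proof.
  unfold rep. destruct excluded_middle_informative as [Ah|Ah].
  - rewrite gmul1r. now apply sgV.
  - apply epsilon_spec. exists h. rewrite gmulVl. apply sg1.
Qed.

Lemma rep_coset h h' : A (gmul (ginv h) h') -> rep h = rep h'.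
Proof.
  intro E. unfold rep.
  assert (Ah : A h <-> A h').
  { split; intro X.
    - replace h' with (gmul h (gmul (ginv h) h')) by apply mulVK. now apply sgM.
    - replace h with (gmul h' (ginv (gmul (ginv h) h'))).
      + apply sgM; auto. now apply sgV.
      + rewrite ginv_mul, ginv_ginv, mulVK. auto. }
  destruct (excluded_middle_informative (A h)) as [X|X];
  destruct (excluded_middle_informative (A h')) as [Y|Y]; try tauto.
  f_equal. apply functional_extensionality. intro t. apply propositional_extensionality.
  split; intro Z.
  - replace (gmul (ginv h') t) with (gmul (ginv (gmul (ginv h) h')) (gmul (ginv h) t)).
    + apply sgM; auto. now apply sgV.
    + rewrite ginv_mul, ginv_ginv, <- gmulA, (gmulA _ h), gmulVr, gmul1l. auto.
  - replace (gmul (ginv h) t) with (gmul (gmul (ginv h) h') (gmul (ginv h') t)).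
    + apply sgM; auto.
    + rewrite <- gmulA, mulVK. auto.
Qed.

Lemma rep_rep h : rep (rep h) = rep h.
Proof. symmetry. apply rep_coset. apply rep_spec. Qed.

Lemma rep_A h : A h -> rep h = gone.
Proof. intro. unfold rep. destruct excluded_middle_informative; tauto. Qed.

Lemma rep_notA h : ~ A h -> ~ A (rep h).
Proof.
  intros N R. apply N. pose proof (rep_spec h) as S.
  apply sgV'. replace (ginv h) with (gmul (gmul (ginv h) (rep h)) (ginv (rep h))) by (rewrite mulKr; reflexivity).
  apply sgM; auto. now apply sgV.
Qed.

Lemma rep_mulA t a : A a -> rep (gmul t a) = rep t.
Proof. intro. symmetry. apply rep_coset. rewrite mulKV. auto. Qed.

Lemma rep_inv_mul_A h : A (gmul (ginv (rep h)) h).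
Proof.
  pose proof (rep_spec h). apply sgV in H. rewrite ginv_mul, ginv_ginv in H. auto.
Qed.

End Reps.

(* symmetric group with opposite multiplication: (f*g) x = g (f x) *)
Section Sym.
Variable X : Type.
Definition symT := {f : X -> X & {g : X -> X | (forall x, g (f x) = x) /\ (forall x, f (g x) = x)}}.
Definition sfun (p : symT) : X -> X := projT1 p.
Definition sinvf (p : symT) : X -> X := proj1_sig (projT2 p).

Lemma sym_eq (p q : symT) : (forall x, sfun p x = sfun q x) -> p = q.
Proof.
  destruct p as [f [g [H1 H2]]], q as [f' [g' [H1' H2']]]. unfold sfun; simpl. intro E.
  assert (f = f') by (apply functional_extensionality; auto). subst f'.
  assert (g = g').
  { apply functional_extensionality. intro x. rewrite <- (H2' x) at 1. rewrite H1. auto. }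
  subst g'. f_equal. f_equal. apply proof_irrelevance.
Qed.

Definition smul (p q : symT) : symT.
Proof.
  destruct p as [f [g [H1 H2]]], q as [f' [g' [H1' H2']]].
  exists (fun x => f' (f x)). exists (fun x => g (g' x)). split; intro x.
  - rewrite H1', H1. auto. - rewrite H2, H2'. auto.
Defined.
Definition sone : symT.
Proof. exists (fun x => x). exists (fun x => x). split; auto. Defined.
Definition sinv (p : symT) : symT.
Proof. destruct p as [f [g [H1 H2]]]. exists g. exists f. split; auto. Defined.

Lemma smul_fun p q x : sfun (smul p q) x = sfun q (sfun p x).
Proof. destruct p as [f [g [H1 H2]]], q as [f' [g' [H1' H2']]]. reflexivity. Qed.
Lemma sone_fun x : sfun sone x = x. Proof. reflexivity. Qed.

Definition SymG : group.
Proof.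
  refine (Group symT smul sone sinv _ _ _ _ _); intros; apply sym_eq; intro;
  repeat rewrite smul_fun; try reflexivity.
  - destruct x as [f [g [H1 H2]]]. simpl. auto.
  - destruct x as [f [g [H1 H2]]]. simpl. auto.
Defined.

Lemma SymG_mul_fun (p q : SymG) x : sfun (gmul p q) x = sfun q (sfun p x).
Proof. apply smul_fun. Qed.
Lemma SymG_one_fun x : sfun (@gone SymG) x = x. Proof. reflexivity. Qed.

Definition mkSym (f g : X -> X) (H1 : forall x, g (f x) = x) (H2 : forall x, f (g x) = x) : SymG :=
  existT _ f (exist _ g (conj H1 H2)).
Lemma mkSym_fun f g H1 H2 x : sfun (mkSym f g H1 H2) x = f x. Proof. reflexivity. Qed.
End Sym.

End P2.
Import P2.

Module P3.

Section Normal.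
Variables (H K : group) (A : H -> Prop) (B : K -> Prop) (phi : H -> K).
Hypotheses (HA : is_subgroup A) (HB : is_subgroup B) (Hphi : is_iso_on A B phi).

Let A1 := sg1 H A HA. Let AM := sgM H A HA. Let AV := sgV H A HA.
Let B1 := sg1 K B HB. Let BM := sgM K B HB. Let BV := sgV K B HB.

Definition phiinv (k : K) : H := epsilon (inhabits gone) (fun a => A a /\ phi a = k).
Lemma phiinv_spec k : B k -> A (phiinv k) /\ phi (phiinv k) = k.
Proof. intro Bk. unfold phiinv. apply epsilon_spec. destruct Hphi as (_ & _ & _ & S). auto. Qed.
Lemma phi_A a : A a -> B (phi a). Proof. apply Hphi. Qed.
Lemma phi_mul a a' : A a -> A a' -> phi (gmul a a') = gmul (phi a) (phi a'). Proof. apply Hphi. Qed.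
Lemma phiinv_phi a : A a -> phiinv (phi a) = a.
Proof.
  intro Aa. destruct (phiinv_spec (phi a)) as [X Y]. now apply phi_A.
  destruct Hphi as (_ & _ & I & _). apply I; auto.
Qed.
Lemma phi_one : phi gone = gone.
Proof. apply (gmul_cancel_l _ (phi gone)). rewrite <- phi_mul; auto. rewrite !gmul1r. auto. Qed.
Lemma phiinv_mul k k' : B k -> B k' -> phiinv (gmul k k') = gmul (phiinv k) (phiinv k').
Proof.
  intros Bk Bk'. destruct (phiinv_spec k) as [X1 Y1]; auto. destruct (phiinv_spec k') as [X2 Y2]; auto.
  rewrite <- (phiinv_phi (gmul (phiinv k) (phiinv k'))) by auto. rewrite phi_mul, Y1, Y2; auto.
Qed.

Definition syl := (H + K)%type.
Definition ty (s : syl) : bool := match s with inl _ => true | inr _ => false end.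
Definition okS (s : syl) : Prop :=
  match s with inl t => rep H A t = t /\ ~ A t | inr t => rep K B t = t /\ ~ B t end.
Fixpoint altR (l : list syl) : Prop :=
  match l with
  | [] => True
  | s :: l' => okS s /\ altR l' /\ match l' with [] => True | s' :: _ => ty s <> ty s' end
  end.
Definition wf (p : list syl * H) : Prop := altR (fst p) /\ A (snd p).
Definition noT (b : bool) (l : list syl) : Prop := match l with s :: _ => ty s <> b | [] => True end.

Definition thH (p : list syl * H) : list syl * H :=
  match fst p with inl t :: r => (r, gmul t (snd p)) | _ => p end.
Definition thHinv (q : list syl * H) : list syl * H :=
  if excluded_middle_informative (A (snd q)) then q
  else (inl (rep H A (snd q)) :: fst q, gmul (ginv (rep H A (snd q))) (snd q)).
Definition actH (h : H) (p : list syl * H) := let q := thH p in thHinv (fst q, gmul (snd q) h).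

Definition thK (p : list syl * H) : list syl * K :=
  match fst p with inr t :: r => (r, gmul t (phi (snd p))) | _ => (fst p, phi (snd p)) end.
Definition thKinv (q : list syl * K) : list syl * H :=
  if excluded_middle_informative (B (snd q)) then (fst q, phiinv (snd q))
  else (inr (rep K B (snd q)) :: fst q, phiinv (gmul (ginv (rep K B (snd q))) (snd q))).
Definition actK (k : K) (p : list syl * H) := let q := thK p in thKinv (fst q, gmul (snd q) k).

Lemma altR_tail s l : altR (s :: l) -> altR l. Proof. simpl. tauto. Qed.

Lemma thH_wf p : wf p -> altR (fst (thH p)) /\ noT true (fst (thH p)).
Proof.
  destruct p as [[|[t|t] r] a]; unfold wf, thH; simpl; intros [W Aa]; try (split; [tauto|easy]).
  destruct W as (O & W & T). split; auto. destruct r as [|s r]; simpl in *; auto.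
  all: try tauto; try congruence.
Qed.

Lemma thHinv_wf r c : altR r -> noT true r -> wf (thHinv (r, c)).
Proof.
  intros W N. unfold thHinv, wf; simpl. destruct excluded_middle_informative as [X|X]; simpl; auto.
  split.
  - split; [|split; auto]. split. apply rep_rep; auto. apply rep_notA; auto.
    destruct r; simpl in *; auto.
  - apply rep_inv_mul_A; auto.
Qed.

Lemma thH_thHinv r c : noT true r -> thH (thHinv (r, c)) = (r, c).
Proof.
  intro N. unfold thHinv; simpl. destruct excluded_middle_informative as [X|X]; simpl.
  - unfold thH; simpl. destruct r as [|[t|t] r]; simpl in *; auto. congruence.
  - unfold thH; simpl. rewrite mulVK. auto.
Qed.

Lemma thHinv_thH p : wf p -> thHinv (thH p) = p.
Proof.
  destruct p as [l a]. intros [W Aa]. simpl in *.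
  destruct l as [|[t|t] r]; unfold thH, thHinv; simpl.
  - destruct excluded_middle_informative; tauto.
  - destruct W as ((Rt & Nt) & W & T).
    destruct excluded_middle_informative as [X|X].
    + exfalso. apply Nt. replace t with (gmul (gmul t a) (ginv a)) by apply mulKr. auto.
    + rewrite rep_mulA, Rt by auto. rewrite mulKV. auto.
  - destruct excluded_middle_informative; tauto.
Qed.

Lemma actH_wf h p : wf p -> wf (actH h p).
Proof. intro W. destruct (thH_wf p W). unfold actH. apply thHinv_wf; auto. Qed.

Lemma actH_comp h h' p : wf p -> actH h' (actH h p) = actH (gmul h h') p.
Proof.
  intro W. destruct (thH_wf p W) as [W1 N1]. unfold actH at 2. unfold actH.
  rewrite thH_thHinv by auto. simpl. rewrite gmulA. auto.
Qed.

Lemma actH_one p : wf p -> actH gone p = p.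
Proof. intro W. unfold actH. rewrite gmul1r. rewrite <- surjective_pairing. apply thHinv_thH; auto. Qed.

Lemma thK_wf p : wf p -> altR (fst (thK p)) /\ noT false (fst (thK p)).
Proof.
  destruct p as [[|[t|t] r] a]; unfold wf, thK; simpl; intros [W Aa]; try (split; [tauto|easy]).
  destruct W as (O & W & T). split; auto. destruct r as [|s r]; simpl; auto.
Qed.

Lemma thKinv_wf r c : altR r -> noT false r -> wf (thKinv (r, c)).
Proof.
  intros W N. unfold thKinv, wf; simpl. destruct excluded_middle_informative as [X|X]; simpl; auto.
  - split; auto. apply phiinv_spec; auto.
  - split.
    + split; [|split; auto]. split. apply rep_rep; auto. apply rep_notA; auto.
      destruct r; simpl in *; auto.
    + apply phiinv_spec. apply rep_inv_mul_A; auto.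
Qed.

Lemma thK_thKinv r c : noT false r -> thK (thKinv (r, c)) = (r, c).
Proof.
  intro N. unfold thKinv; simpl. destruct excluded_middle_informative as [X|X]; simpl.
  - unfold thK; simpl. destruct (phiinv_spec c X) as [_ E]. rewrite E.
    destruct r as [|[t|t] r]; simpl in *; auto. congruence.
  - unfold thK; simpl. destruct (phiinv_spec (gmul (ginv (rep K B c)) c)) as [_ E].
    apply rep_inv_mul_A; auto. rewrite E, mulVK. auto.
Qed.

Lemma thKinv_thK p : wf p -> thKinv (thK p) = p.
Proof.
  destruct p as [l a]. intros [W Aa]. simpl in *. pose proof (phi_A a Aa) as Ba.
  destruct l as [|[t|t] r]; unfold thK, thKinv; simpl.
  - destruct excluded_middle_informative; try tauto. rewrite phiinv_phi; auto.
  - destruct excluded_middle_informative; try tauto. rewrite phiinv_phi; auto.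
  - destruct W as ((Rt & Nt) & W & T).
    destruct excluded_middle_informative as [X|X].
    + exfalso. apply Nt. replace t with (gmul (gmul t (phi a)) (ginv (phi a))) by apply mulKr. auto.
    + rewrite rep_mulA, Rt by auto. rewrite mulKV, phiinv_phi; auto.
Qed.

Lemma actK_wf h p : wf p -> wf (actK h p).
Proof. intro W. destruct (thK_wf p W). unfold actK. apply thKinv_wf; auto. Qed.

Lemma actK_comp h h' p : wf p -> actK h' (actK h p) = actK (gmul h h') p.
Proof.
  intro W. destruct (thK_wf p W) as [W1 N1]. unfold actK at 2. unfold actK.
  rewrite thK_thKinv by auto. simpl. rewrite gmulA. auto.
Qed.

Lemma actK_one p : wf p -> actK gone p = p.
Proof. intro W. unfold actK. rewrite gmul1r. rewrite <- surjective_pairing. apply thKinv_thK; auto. Qed.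

Lemma act_agree a p : A a -> wf p -> actH a p = actK (phi a) p.
Proof.
  intros Aa [W Aa0]. destruct p as [l a0]. simpl in *.
  destruct l as [|[t|t] r]; unfold actH, actK, thH, thK, thHinv, thKinv; simpl.
  - destruct excluded_middle_informative as [X|X]; [|exfalso; auto].
    destruct excluded_middle_informative as [Y|Y]; [|exfalso; apply Y; apply BM; apply phi_A; auto].
    rewrite <- phi_mul, phiinv_phi; auto.
  - destruct W as ((Rt & Nt) & W & T).
    destruct excluded_middle_informative as [X|X].
    + exfalso. apply Nt. replace t with (gmul (gmul (gmul t a0) a) (ginv (gmul a0 a))).
      * auto. * rewrite <- (gmulA _ t a0 a), mulKr. auto.
    + destruct excluded_middle_informative as [Y|Y]; [|exfalso; apply Y; apply BM; apply phi_A; auto].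
      rewrite <- phi_mul, phiinv_phi by auto. rewrite <- gmulA, rep_mulA, Rt by auto. rewrite mulKV. auto.
  - destruct W as ((Rt & Nt) & W & T).
    destruct excluded_middle_informative as [X|X]; [|exfalso; auto].
    destruct excluded_middle_informative as [Y|Y].
    + exfalso. apply Nt. replace t with (gmul (gmul (gmul t (phi a0)) (phi a)) (ginv (gmul (phi a0) (phi a)))).
      * apply BM; auto. apply BV. apply BM; apply phi_A; auto.
      * rewrite <- (gmulA _ t (phi a0) (phi a)), mulKr. auto.
    + rewrite <- (gmulA _ t (phi a0) (phi a)), rep_mulA, Rt; auto. rewrite mulKV, <- phi_mul, phiinv_phi; auto.
      apply BM; apply phi_A; auto.
Qed.

Definition Om := {p : list syl * H | wf p}.
Lemma Om_eq (p q : Om) : proj1_sig p = proj1_sig q -> p = q.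
Proof. destruct p, q; simpl. intro; subst. f_equal. apply proof_irrelevance. Qed.

Definition OactH (h : H) (w : Om) : Om := exist _ (actH h (proj1_sig w)) (actH_wf h _ (proj2_sig w)).
Definition OactK (k : K) (w : Om) : Om := exist _ (actK k (proj1_sig w)) (actK_wf k _ (proj2_sig w)).

Definition permH (h : H) : SymG Om.
Proof.
  refine (mkSym Om (OactH h) (OactH (ginv h)) _ _); intro w; apply Om_eq; simpl;
  rewrite actH_comp by (try apply actH_wf; apply proj2_sig);
  [rewrite gmulVr|rewrite gmulVl]; apply actH_one; apply proj2_sig.
Defined.
Definition permK (k : K) : SymG Om.
Proof.
  refine (mkSym Om (OactK k) (OactK (ginv k)) _ _); intro w; apply Om_eq; simpl;
  rewrite actK_comp by (try apply actK_wf; apply proj2_sig);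
  [rewrite gmulVr|rewrite gmulVl]; apply actK_one; apply proj2_sig.
Defined.

Lemma permH_hom : is_hom permH.
Proof.
  intros x y. apply sym_eq. intro w. rewrite SymG_mul_fun. unfold permH. rewrite !mkSym_fun.
  apply Om_eq. simpl. rewrite actH_comp; auto. apply proj2_sig.
Qed.
Lemma permK_hom : is_hom permK.
Proof.
  intros x y. apply sym_eq. intro w. rewrite SymG_mul_fun. unfold permK. rewrite !mkSym_fun.
  apply Om_eq. simpl. rewrite actK_comp; auto. apply proj2_sig.
Qed.
Lemma perm_agree a : A a -> permH a = permK (phi a).
Proof.
  intro Aa. apply sym_eq. intro w. unfold permH, permK. rewrite !mkSym_fun. apply Om_eq. simpl.
  apply act_agree; auto. apply proj2_sig.
Qed.

End Normal.

End P3.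
Import P3.

Module P4.

Section Gen.
Variables (H K G : group) (A : H -> Prop) (phi : H -> K) (iH : H -> G) (iK : K -> G).
Hypothesis Ham : is_amalgam A phi iH iK.

Definition Im (g : G) : Prop := (exists h, iH h = g) \/ (exists k, iK k = g).
Definition InG0 (g : G) : Prop := exists l, word_in Im l /\ word_prod l = g.

Lemma InG0_mul x y : InG0 x -> InG0 y -> InG0 (gmul x y).
Proof.
  intros (l1 & W1 & P1) (l2 & W2 & P2). exists (l1 ++ l2). split.
  apply Forall_app; auto. rewrite word_prod_app. congruence.
Qed.
Lemma InG0_one : InG0 gone. Proof. exists []. split. constructor. auto. Qed.
Lemma InG0_inv x : InG0 x -> InG0 (ginv x).
Proof.
  intros (l & W & P). exists (rev (map ginv l)). split.
  apply word_in_inv; auto. rewrite word_prod_inv. congruence.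
Qed.

Definition G0T := {g : G | InG0 g}.
Lemma G0_eq (p q : G0T) : proj1_sig p = proj1_sig q -> p = q.
Proof. destruct p, q; simpl. intro; subst. f_equal. apply proof_irrelevance. Qed.

Definition G0 : group.
Proof.
  refine (Group G0T (fun p q => exist _ (gmul (proj1_sig p) (proj1_sig q)) (InG0_mul _ _ (proj2_sig p) (proj2_sig q)))
     (exist _ gone InG0_one) (fun p => exist _ (ginv (proj1_sig p)) (InG0_inv _ (proj2_sig p))) _ _ _ _ _);
  intros; apply G0_eq; simpl.
  apply gmulA. apply gmul1l. apply gmul1r. apply gmulVl. apply gmulVr.
Defined.

Lemma gen_images (g : G) : exists l, word_in Im l /\ word_prod l = g.
Proof.
  destruct Ham as (HiH & HiK & Hc & U).
  assert (fH : forall h, InG0 (iH h)).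
  { intro h. exists [iH h]. split. constructor. left. left. eauto. constructor. simpl. apply gmul1r. }
  assert (fK : forall k, InG0 (iK k)).
  { intro k. exists [iK k]. split. constructor. left. right. eauto. constructor. simpl. apply gmul1r. }
  destruct (U G0 (fun h => exist _ (iH h) (fH h)) (fun k => exist _ (iK k) (fK k))) as (u0 & Hu0 & E1 & E2 & _).
  - intros x y. apply G0_eq. simpl. apply HiH.
  - intros x y. apply G0_eq. simpl. apply HiK.
  - intros a Aa. apply G0_eq. simpl. auto.
  - destruct (U G iH iK HiH HiK Hc) as (u1 & Hu1 & F1 & F2 & Uq).
    assert (X1 : g = u1 g). { apply (Uq (fun x => x)); auto. intros x y. auto. }
    assert (X2 : proj1_sig (u0 g) = u1 g).
    { apply (Uq (fun x => proj1_sig (u0 x))).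
      - intros x y. rewrite Hu0. auto.
      - intro h. rewrite E1. auto.
      - intro k. rewrite E2. auto. }
    rewrite X1, <- X2. apply (proj2_sig (u0 g)).
Qed.
End Gen.

Section Swap.
Variables (H K G : group) (A : H -> Prop) (B : K -> Prop) (phi : H -> K) (iH : H -> G) (iK : K -> G).
Hypotheses (HA : is_subgroup A) (HB : is_subgroup B) (Hphi : is_iso_on A B phi).
Hypothesis Ham : is_amalgam A phi iH iK.

Lemma iso_swap : is_iso_on B A (phiinv H K A phi).
Proof.
  split; [|split; [|split]].
  - intros b Bb. apply (phiinv_spec H K A B phi Hphi); auto.
  - intros b b' Bb Bb'. apply (phiinv_mul H K A B phi HA Hphi); auto.
  - intros b b' Bb Bb' E. destruct (phiinv_spec H K A B phi Hphi b Bb) as [_ E1].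
    destruct (phiinv_spec H K A B phi Hphi b' Bb') as [_ E2]. congruence.
  - intros a Aa. exists (phi a). split. apply (phi_A H K A B phi Hphi); auto. apply (phiinv_phi H K A B phi Hphi); auto.
Qed.

Lemma amalgam_swap : is_amalgam B (phiinv H K A phi) iK iH.
Proof.
  destruct Ham as (HiH & HiK & Hc & U). split; [|split; [|split]]; auto.
  - intros b Bb. destruct (phiinv_spec H K A B phi Hphi b Bb) as [X E].
    rewrite Hc by auto. congruence.
  - intros L f g Hf Hg Hfg. destruct (U L g f) as (u & Hu & E1 & E2 & Uq); auto.
    + intros a Aa. assert (Ba : B (phi a)) by (apply (phi_A H K A B phi Hphi); auto).
      rewrite (Hfg _ Ba). rewrite (phiinv_phi H K A B phi Hphi); auto.
    + exists u. split; [auto|split; [auto|split; [auto|]]]. intros v Hv X Y. apply Uq; auto.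
Qed.
End Swap.

End P4.
Import P4.

Module P5.

Section Core.
Variables (H K G : group) (A : H -> Prop) (B : K -> Prop) (phi : H -> K) (iH : H -> G) (iK : K -> G).
Hypotheses (HA : is_subgroup A) (HB : is_subgroup B) (Hphi : is_iso_on A B phi) (Ham : is_amalgam A phi iH iK).
Variable u : G -> SymG (Om H K A B).
Hypotheses (Hu : is_hom u) (HuH : forall h, u (iH h) = permH H K A B HA h)
  (HuK : forall k, u (iK k) = permK H K A B phi HB Hphi k).

Let A1 := sg1 H A HA. Let AM := sgM H A HA. Let AV := sgV H A HA.
Let B1 := sg1 K B HB. Let BM := sgM K B HB. Let BV := sgV K B HB.
Let HiH : is_hom iH := proj1 Ham.
Let HiK : is_hom iK := proj1 (proj2 Ham).
Let Hc : forall a, A a -> iH a = iK (phi a) := proj1 (proj2 (proj2 Ham)).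

Notation syl := (syl H K).
Notation thH := (thH H K).
Notation thHinv := (thHinv H K A).
Notation actH := (actH H K A).
Notation thK := (thK H K phi).
Notation thKinv := (thKinv H K A B phi).
Notation actK := (actK H K A B phi).
Notation wf := (wf H K A B).
Notation noT := (noT H K).
Notation ty := (ty H K).
Notation phiinv := (phiinv H K A phi).

Lemma wf0 : wf ([], gone). Proof. split; simpl; auto. Qed.
Definition om0 : Om H K A B := exist _ ([], gone) wf0.
Definition Psi (g : G) : list syl * H := proj1_sig (sfun _ (u g) om0).

Lemma Psi_wf g : wf (Psi g). Proof. unfold Psi. exact (proj2_sig _). Qed.

Lemma Psi_H g h : Psi (gmul g (iH h)) = actH h (Psi g).
Proof. unfold Psi. rewrite Hu, SymG_mul_fun, HuH. unfold permH. rewrite mkSym_fun. reflexivity. Qed.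
Lemma Psi_K g k : Psi (gmul g (iK k)) = actK k (Psi g).
Proof. unfold Psi. rewrite Hu, SymG_mul_fun, HuK. unfold permK. rewrite mkSym_fun. reflexivity. Qed.

Definition img (s : syl) : G := match s with inl t => iH t | inr t => iK t end.
Fixpoint Pr (l : list syl) : G := match l with [] => gone | s :: l' => gmul (Pr l') (img s) end.
Definition sigma (p : list syl * H) : G := gmul (Pr (fst p)) (iH (snd p)).

Lemma sigma_thH p : sigma p = gmul (Pr (fst (thH p))) (iH (snd (thH p))).
Proof.
  destruct p as [[|[t|t] r] a]; unfold sigma, P3.thH; simpl; auto.
  rewrite HiH, gmulA. auto.
Qed.
Lemma sigma_thHinv r c : sigma (thHinv (r, c)) = gmul (Pr r) (iH c).
Proof.
  unfold P3.thHinv; simpl. destruct excluded_middle_informative; unfold sigma; simpl; auto.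
  rewrite <- gmulA, <- HiH, mulVK. auto.
Qed.
Lemma sigma_actH h p : sigma (actH h p) = gmul (sigma p) (iH h).
Proof.
  unfold P3.actH. rewrite sigma_thHinv, sigma_thH, HiH, gmulA. auto.
Qed.

Lemma sigma_thK p : A (snd p) -> sigma p = gmul (Pr (fst (thK p))) (iK (snd (thK p))).
Proof.
  intro Aa. destruct p as [[|[t|t] r] a]; unfold sigma, P3.thK; simpl in *; rewrite (Hc a Aa); auto.
  rewrite HiK, gmulA. auto.
Qed.
Lemma sigma_thKinv r c : sigma (thKinv (r, c)) = gmul (Pr r) (iK c).
Proof.
  unfold P3.thKinv; simpl. destruct excluded_middle_informative as [X|X]; unfold sigma; simpl; auto.
  - destruct (phiinv_spec H K A B phi Hphi c X) as [Y E]. rewrite Hc, E; auto.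
  - assert (Y : B (gmul (ginv (rep K B c)) c)) by (apply rep_inv_mul_A; auto).
    destruct (phiinv_spec H K A B phi Hphi _ Y) as [Z E]. rewrite Hc, E; auto.
    rewrite <- gmulA, <- HiK, mulVK. auto.
Qed.
Lemma sigma_actK k p : wf p -> sigma (actK k p) = gmul (sigma p) (iK k).
Proof.
  intros [W Aa]. unfold P3.actK. rewrite sigma_thKinv, (sigma_thK p), HiK, gmulA; auto.
Qed.

Lemma u_one : u gone = gone. Proof. apply hom_one; auto. Qed.

Lemma sigma_u g : forall w : Om H K A B, sigma (proj1_sig (sfun _ (u g) w)) = gmul (sigma (proj1_sig w)) g.
Proof.
  destruct (gen_images H K G A phi iH iK Ham g) as (l & W & P). subst g. induction l as [|a l IH]; intro w.
  - simpl. rewrite u_one, SymG_one_fun, gmul1r. auto.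
  - inversion W; subst. simpl. rewrite Hu, SymG_mul_fun, IH by auto. rewrite gmulA. f_equal.
    assert (Ia : Im H K G iH iK a).
    { destruct H2 as [X|X]; auto. destruct X as [[h E]|[k E]].
      - left. exists (ginv h). rewrite hom_inv, E, ginv_ginv; auto.
      - right. exists (ginv k). rewrite hom_inv, E, ginv_ginv; auto. }
    destruct Ia as [[h E]|[k E]]; subst a.
    + rewrite HuH. unfold permH. rewrite mkSym_fun. simpl. apply sigma_actH.
    + rewrite HuK. unfold permK. rewrite mkSym_fun. simpl. apply sigma_actK. apply proj2_sig.
Qed.

Lemma sigma_Psi g : sigma (Psi g) = g.
Proof. unfold Psi. rewrite sigma_u. unfold sigma; simpl. rewrite hom_one, !gmul1l; auto. Qed.

Lemma Psi_inj x y : Psi x = Psi y -> x = y.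
Proof. intro E. rewrite <- (sigma_Psi x), <- (sigma_Psi y), E. auto. Qed.

Lemma Psi_one : Psi gone = ([], gone).
Proof. unfold Psi. rewrite u_one. reflexivity. Qed.

Definition rl g := fst (Psi g).
Definition ag g := snd (Psi g).
Definition keyH g := fst (thH (Psi g)).
Definition coH g := snd (thH (Psi g)).
Definition keyK g := fst (thK (Psi g)).
Definition coK g := snd (thK (Psi g)).

Lemma ag_A g : A (ag g). Proof. exact (proj2 (Psi_wf g)). Qed.
Lemma keyH_noT g : noT true (keyH g). Proof. exact (proj2 (thH_wf H K A B _ (Psi_wf g))). Qed.
Lemma keyK_noT g : noT false (keyK g). Proof. exact (proj2 (thK_wf H K A B phi _ (Psi_wf g))). Qed.
Lemma rl_alt g : altR H K A B (rl g). Proof. exact (proj1 (Psi_wf g)). Qed.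

Lemma thH_act h p : wf p -> thH (actH h p) = (fst (thH p), gmul (snd (thH p)) h).
Proof. intro W. unfold P3.actH. apply thH_thHinv. exact (proj2 (thH_wf H K A B _ W)). Qed.
Lemma thK_act k p : wf p -> thK (actK k p) = (fst (thK p), gmul (snd (thK p)) k).
Proof. intro W. unfold P3.actK. apply thK_thKinv; auto. exact (proj2 (thK_wf H K A B phi _ W)). Qed.

Lemma keyH_step g h : keyH (gmul g (iH h)) = keyH g /\ coH (gmul g (iH h)) = gmul (coH g) h.
Proof. unfold keyH, coH. rewrite Psi_H, thH_act by apply Psi_wf. auto. Qed.
Lemma keyK_step g k : keyK (gmul g (iK k)) = keyK g /\ coK (gmul g (iK k)) = gmul (coK g) k.
Proof. unfold keyK, coK. rewrite Psi_K, thK_act by apply Psi_wf. auto. Qed.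

Definition shape (b : bool) (r l : list syl) : Prop := l = r \/ exists s, ty s = b /\ l = s :: r.

Lemma shapeH g : shape true (keyH g) (rl g).
Proof.
  unfold keyH, rl. destruct (Psi g) as [[|[t|t] r] a]; unfold P3.thH, shape; simpl; auto.
  right. exists (inl t). auto.
Qed.
Lemma shapeK g : shape false (keyK g) (rl g).
Proof.
  unfold keyK, rl. destruct (Psi g) as [[|[t|t] r] a]; unfold P3.thK, shape; simpl; auto.
  right. exists (inr t). auto.
Qed.

Lemma keyH_eq x y : keyH x = keyH y -> y = gmul x (iH (gmul (ginv (coH x)) (coH y))).
Proof.
  intro E. apply Psi_inj. rewrite Psi_H. unfold P3.actH. fold (keyH x). fold (coH x).
  rewrite mulVK, E. unfold keyH, coH. rewrite <- surjective_pairing. rewrite (thHinv_thH H K A B HA); auto. apply Psi_wf.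
Qed.
Lemma keyK_eq x y : keyK x = keyK y -> y = gmul x (iK (gmul (ginv (coK x)) (coK y))).
Proof.
  intro E. apply Psi_inj. rewrite Psi_K. unfold P3.actK. fold (keyK x). fold (coK x).
  rewrite mulVK, E. unfold keyK, coK. rewrite <- surjective_pairing. rewrite (thKinv_thK H K A B phi HB Hphi); auto. apply Psi_wf.
Qed.

Lemma thH_mulr l a c : thH (l, gmul a c) = (fst (thH (l, a)), gmul (snd (thH (l, a))) c).
Proof. destruct l as [|[t|t] r]; unfold P3.thH; simpl; auto. rewrite gmulA. auto. Qed.

Lemma rl_eq x y : rl x = rl y -> y = gmul x (iH (gmul (ginv (ag x)) (ag y))).
Proof.
  intro E. apply Psi_inj. rewrite Psi_H. unfold P3.actH.
  assert (Px : Psi x = (rl x, ag x)) by (unfold rl, ag; destruct (Psi x); auto).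
  assert (Py : Psi y = (rl y, ag y)) by (unfold rl, ag; destruct (Psi y); auto).
  rewrite Px, <- thH_mulr, mulVK, E, <- Py. symmetry. apply (thHinv_thH H K A B HA). apply Psi_wf.
Qed.

Lemma coH_rl x y : rl x = rl y -> coH y = gmul (coH x) (gmul (ginv (ag x)) (ag y)).
Proof.
  intro E. unfold coH.
  assert (Px : Psi x = (rl x, ag x)) by (unfold rl, ag; destruct (Psi x); auto).
  assert (Py : Psi y = (rl y, ag y)) by (unfold rl, ag; destruct (Psi y); auto).
  rewrite Px, Py, E. rewrite <- (mulVK _ (ag x) (ag y)) at 1. rewrite thH_mulr. auto.
Qed.

Lemma drop_last x s r : rl x = s :: r -> exists y, rl y = r.
Proof.
  intro E. destruct s as [t|t].
  - exists (gmul x (iH (ginv (coH x)))).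
    assert (Kx : keyH x = r).
    { unfold keyH. unfold rl in E. destruct (Psi x) as [l a]. simpl in *. subst l. auto. }
    destruct (keyH_step x (ginv (coH x))) as [E1 E2]. rewrite gmulVr in E2.
    set (y := gmul x (iH (ginv (coH x)))) in *.
    assert (Py : Psi y = thHinv (keyH y, coH y)).
    { unfold keyH, coH. rewrite <- surjective_pairing, (thHinv_thH H K A B HA); auto. apply Psi_wf. }
    unfold rl. rewrite Py, E1, E2, Kx. unfold P3.thHinv; simpl.
    destruct excluded_middle_informative; simpl; auto. exfalso; auto.
  - exists (gmul x (iK (ginv (coK x)))).
    assert (Kx : keyK x = r).
    { unfold keyK. unfold rl in E. destruct (Psi x) as [l a]. simpl in *. subst l. auto. }
    destruct (keyK_step x (ginv (coK x))) as [E1 E2]. rewrite gmulVr in E2.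
    set (y := gmul x (iK (ginv (coK x)))) in *.
    assert (Py : Psi y = thKinv (keyK y, coK y)).
    { unfold keyK, coK. rewrite <- surjective_pairing, (thKinv_thK H K A B phi HB Hphi); auto. apply Psi_wf. }
    unfold rl. rewrite Py, E1, E2, Kx. unfold P3.thKinv; simpl.
    destruct excluded_middle_informative; simpl; auto. exfalso; auto.
Qed.

Lemma E_nonempty x Q : (exists m, rl x = m ++ Q) -> exists c, rl c = Q.
Proof.
  intros [m E]. revert x E. induction m as [|s m IH]; intros x E.
  - eauto.
  - simpl in E. destruct (drop_last x s (m ++ Q) E) as [y Ey]. eapply IH; eauto.
Qed.


Lemma suffix_uniq (m m' : list syl) s s' r : m ++ s :: r = m' ++ s' :: r -> s = s' /\ m = m'.
Proof.
  intro E. replace (m ++ s :: r) with ((m ++ [s]) ++ r) in E by (rewrite <- app_assoc; auto).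
  replace (m' ++ s' :: r) with ((m' ++ [s']) ++ r) in E by (rewrite <- app_assoc; auto).
  apply app_inv_tail in E. apply app_inj_tail in E. tauto.
Qed.

Lemma list_neq_len (l1 l2 : list syl) : length l1 <> length l2 -> l1 <> l2.
Proof. intros N E. subst. auto. Qed.

Lemma L_shift b r l1 l2 m s0 r0 : shape b r l1 -> shape b r l2 -> l1 = m ++ s0 :: r0 ->
  (exists m', l2 = m' ++ s0 :: r0) \/ (l1 = s0 :: r0 /\ r = r0 /\ ty s0 = b /\ m = []).
Proof.
  intros [X|[s1 [T1 X]]] S2 E; subst l1.
  - left. destruct S2 as [Y|[s2 [T2 Y]]]; subst l2. eauto. exists (s2 :: m). rewrite E. auto.
  - destruct m as [|a m].
    + simpl in E. injection E as -> ->. right. auto.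
    + simpl in E. injection E as -> ->. left.
      destruct S2 as [Y|[s2 [T2 Y]]]; subst l2. eauto. exists (s2 :: m). auto.
Qed.

Lemma C1 b r l1 l2 Q : shape b r l1 -> shape b r l2 -> (exists m, l1 = m ++ Q) -> ~ (exists m, l2 = m ++ Q) -> l1 = Q.
Proof.
  intros S1 S2 [m E] N. destruct S1 as [X|[s1 [T1 X]]]; subst l1.
  - exfalso. apply N. destruct S2 as [Y|[s2 [T2 Y]]]; subst l2. eauto. exists (s2 :: m). rewrite E. auto.
  - destruct m as [|a m]; auto. simpl in E. injection E as -> ->. exfalso. apply N.
    destruct S2 as [Y|[s2 [T2 Y]]]; subst l2. eauto. exists (s2 :: m). auto.
Qed.

Definition Dbl (Q : list syl) (c : bool) (l : list syl) : Prop := exists m s, ty s = c /\ l = m ++ s :: Q.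

Lemma C2 b r l1 l2 Q c : shape b r l1 -> shape b r l2 -> Dbl Q c l1 -> ~ Dbl Q c l2 -> l2 = Q.
Proof.
  intros S1 S2 (m & s & T & E) N. destruct S1 as [X|[s1 [T1 X]]]; subst l1.
  - exfalso. apply N. destruct S2 as [Y|[s2 [T2 Y]]]; subst l2. exists m, s. auto.
    exists (s2 :: m), s. rewrite E. auto.
  - destruct m as [|a m].
    + simpl in E. injection E as -> ->. destruct S2 as [Y|[s2 [T2 Y]]]; subst l2; auto.
      exfalso. apply N. exists [], s2. split; auto. congruence.
    + simpl in E. injection E as -> ->. exfalso. apply N.
      destruct S2 as [Y|[s2 [T2 Y]]]; subst l2. exists m, s; auto. exists (s2 :: m), s. auto.
Qed.

Variables (SH : H -> Prop) (SK : K -> Prop) (dH : H -> H -> nat) (dK : K -> K -> nat) (d : G -> G -> nat).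
Hypotheses (HdH : word_metric SH dH) (HdK : word_metric SK dK)
  (SA : forall a, A a -> SH a) (SB : forall b, B b -> SK b).
Definition SG (g : G) : Prop := (exists h, SH h /\ iH h = g) \/ (exists k, SK k /\ iK k = g).
Hypothesis Hd : word_metric SG d.

Definition letter (a : G) := SG a \/ SG (ginv a).
Lemma letter_cases a : letter a ->
  (exists h, (SH h \/ SH (ginv h)) /\ a = iH h) \/ (exists k, (SK k \/ SK (ginv k)) /\ a = iK k).
Proof.
  intros [[[h [S E]]|[k [S E]]]|[[h [S E]]|[k [S E]]]].
  - left. exists h. auto.
  - right. exists k. auto.
  - left. exists (ginv h). rewrite ginv_ginv. split; auto. rewrite hom_inv, E, ginv_ginv; auto.
  - right. exists (ginv k). rewrite ginv_ginv. split; auto. rewrite hom_inv, E, ginv_ginv; auto.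
Qed.

Definition adj x y := exists a, letter a /\ y = gmul x a.
Lemma adj_sym x y : adj x y -> adj y x.
Proof.
  intros [a [L E]]. exists (ginv a). split.
  - destruct L; [right; rewrite ginv_ginv|left]; auto.
  - subst y. rewrite <- gmulA, gmulVr, gmul1r. auto.
Qed.
Lemma adj_shape x y : adj x y -> exists b r, shape b r (rl x) /\ shape b r (rl y).
Proof.
  intros [a [L E]]. subst y. destruct (letter_cases a L) as [[h [_ ->]]|[k [_ ->]]].
  - exists true, (keyH x). split. apply shapeH. rewrite <- (proj1 (keyH_step x h)). apply shapeH.
  - exists false, (keyK x). split. apply shapeK. rewrite <- (proj1 (keyK_step x k)). apply shapeK.
Qed.
Lemma adj_d x y : adj x y -> d x y <= 1.
Proof. intros [a [L E]]. subst. apply wm_letter with (S := SG); auto. Qed.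

Lemma dsym x y : d x y = d y x. Proof. apply wm_sym with (S := SG); auto. Qed.
Lemma dtri x y z : d x z <= d x y + d y z. Proof. apply wm_tri with (S := SG); auto. Qed.
Lemma drefl x : d x x = 0. Proof. apply wm_refl with (S := SG); auto. Qed.

Definition sep (D E : G -> Prop) :=
  (forall x y, adj x y -> D x -> ~ D y -> E x \/ E y) /\ (forall a b, E a -> E b -> d a b <= 1).

Lemma sep_compl D E : sep D E -> sep (fun x => ~ D x) E.
Proof.
  intros [S1 S2]. split; auto. intros x y Axy Dx Dy.
  destruct (S1 y x (adj_sym _ _ Axy)) as [X|X]; auto.
  destruct (excluded_middle_informative (D y)); tauto.
Qed.

Lemma sep_geo D E x y : sep D E -> D x -> ~ D y -> exists c, E c /\ d x c + d c y <= d x y.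
Proof.
  intros [S1 S2] Dx Dy. destruct (wm_ex _ SG d Hd x y) as (l & W & L & P).
  enough (exists c, E c /\ d x c + d c y <= length l) by (destruct H0 as [c [Ec Hc']]; exists c; split; auto; lia).
  clear L. revert x Dx P. induction l as [|a l IH]; intros x Dx P.
  - simpl in P. symmetry in P. apply eq_of_inv_one in P. subst. tauto.
  - inversion W; subst. simpl in P.
    assert (Axx : adj x (gmul x a)) by (exists a; split; auto).
    assert (P' : word_prod l = gmul (ginv (gmul x a)) y).
    { rewrite ginv_mul, <- gmulA, <- P, mulKV. auto. }
    destruct (excluded_middle_informative (D (gmul x a))) as [Dx'|Dx'].
    + destruct (IH H3 _ Dx' P') as [c [Ec Hc']]. exists c. split; auto.
      pose proof (dtri x (gmul x a) c). pose proof (adj_d _ _ Axx). simpl. lia.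
    + destruct (S1 _ _ Axx Dx Dx') as [Ex|Ex].
      * exists x. split; auto. rewrite drefl. simpl.
        pose proof (wm_le _ SG d Hd x y (a :: l) W). simpl in H0. rewrite P in H0. specialize (H0 eq_refl). lia.
      * exists (gmul x a). split; auto. pose proof (adj_d _ _ Axx).
        pose proof (wm_le _ SG d Hd _ y l H3 P'). simpl. lia.
Qed.

Lemma sep_fix D E x y c : sep D E -> D x -> ~ D y -> E c -> d x c + d c y <= d x y + 2.
Proof.
  intros S Dx Dy Ec. destruct (sep_geo D E x y S Dx Dy) as [c' [Ec' Hc']].
  pose proof (proj2 S c c' Ec Ec'). pose proof (dtri x c' c). pose proof (dtri c c' y).
  pose proof (dsym c c'). lia.
Qed.

Lemma split4 D E c x y z w : sep D E -> E c -> D x -> D y -> ~ D z -> ~ D w -> FPs d 4 x y z w.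
Proof.
  intros S Ec Dx Dy Dz Dw. unfold FPs.
  pose proof (sep_fix D E x z c S Dx Dz Ec). pose proof (sep_fix D E x w c S Dx Dw Ec).
  pose proof (sep_fix D E y z c S Dy Dz Ec). pose proof (sep_fix D E y w c S Dy Dw Ec).
  pose proof (dtri x c y). pose proof (dtri z c w). pose proof (dtri x c z). pose proof (dtri x c w).
  pose proof (dtri y c z). pose proof (dtri y c w).
  pose proof (dsym z c). pose proof (dsym w c). pose proof (dsym y c). pose proof (dsym x c). lia.
Qed.

Lemma proj_pt D E c x y z w dl : sep D E -> E c -> D x -> ~ D y -> ~ D z -> ~ D w ->
  FPs d dl c y z w -> FPs d (dl + 2) x y z w.
Proof.
  intros S Ec Dx Dy Dz Dw. unfold FPs.
  pose proof (sep_fix D E x y c S Dx Dy Ec). pose proof (sep_fix D E x z c S Dx Dz Ec).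
  pose proof (sep_fix D E x w c S Dx Dw Ec).
  pose proof (dtri x c y). pose proof (dtri x c z). pose proof (dtri x c w). lia.
Qed.

Lemma proj_pt' D E c x y z w dl : sep D E -> E c -> ~ D x -> D y -> D z -> D w ->
  FPs d dl c y z w -> FPs d (dl + 2) x y z w.
Proof.
  intros S Ec Dx Dy Dz Dw. apply (proj_pt (fun x => ~ D x) E c); auto. apply sep_compl; auto.
Qed.

Lemma Psi_split x : Psi x = (rl x, ag x).
Proof. unfold rl, ag. destruct (Psi x); auto. Qed.

Lemma keyH_char x r0 : noT true r0 -> (keyH x = r0 <-> (rl x = r0 \/ exists t, rl x = inl t :: r0)).
Proof.
  intro N. split.
  - intro E. destruct (shapeH x) as [X|[s [T X]]]; rewrite E in X; auto.
    destruct s as [t|t]; simpl in T; try discriminate. right. eauto.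
  - unfold keyH. rewrite Psi_split. intros [X|[t X]]; rewrite X; unfold P3.thH; simpl; auto.
    destruct r0 as [|[t|t] r]; simpl in *; auto. congruence.
Qed.

Lemma coH_inl x t r0 : rl x = inl t :: r0 -> coH x = gmul t (ag x).
Proof. intro E. unfold coH. rewrite Psi_split, E. reflexivity. Qed.
Lemma coH_noinl x : noT true (rl x) -> coH x = ag x.
Proof. intro N. unfold coH. rewrite Psi_split. destruct (rl x) as [|[t|t] r]; simpl in *; auto. congruence. Qed.

Lemma dH_A h a : A a -> dH h (gmul h a) <= 1.
Proof. intro Aa. apply wm_letter with (S := SH); auto. Qed.
Lemma dH_sym h h' : dH h h' = dH h' h. Proof. apply wm_sym with (S := SH); auto. Qed.

Section Rho.
Variable r0 : list syl.
Hypothesis Nr0 : noT true r0.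

Definition deep (x : G) (t : H) := exists m, rl x = m ++ inl t :: r0.
Definition rho (x : G) : H :=
  if excluded_middle_informative (keyH x = r0) then coH x
  else if excluded_middle_informative (exists t, deep x t) then epsilon (inhabits gone) (deep x) else gone.

Lemma deep_uniq x t t' : deep x t -> deep x t' -> t = t'.
Proof.
  intros [m E] [m' E']. rewrite E in E'. apply suffix_uniq in E'. destruct E' as [X _]. congruence.
Qed.
Lemma rho_in x : keyH x = r0 -> rho x = coH x.
Proof. intro E. unfold rho. destruct excluded_middle_informative; tauto. Qed.
Lemma rho_deep x t : keyH x <> r0 -> deep x t -> rho x = t.
Proof.
  intros N D. unfold rho. destruct excluded_middle_informative; try tauto.
  destruct excluded_middle_informative as [X|X]. 2: exfalso; eauto.
  apply (deep_uniq x). apply epsilon_spec. auto. auto.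
Qed.
Lemma rho_away x : keyH x <> r0 -> ~ (exists t, deep x t) -> rho x = gone.
Proof. intros N D. unfold rho. do 2 (destruct excluded_middle_informative; try tauto). Qed.

Lemma rho_same x y : keyH x <> r0 -> keyH y <> r0 -> (forall t, deep x t -> deep y t) -> (forall t, deep y t -> deep x t) ->
  rho x = rho y.
Proof.
  intros Nx Ny F1 F2. destruct (excluded_middle_informative (exists t, deep x t)) as [[t D]|D].
  - rewrite (rho_deep x t), (rho_deep y t); auto.
  - rewrite !rho_away; auto. intros [t Dt]. apply D. eauto.
Qed.

Lemma rho_lip_H x h : SH h \/ SH (ginv h) -> dH (rho x) (rho (gmul x (iH h))) <= 1.
Proof.
  intro Sh. destruct (keyH_step x h) as [E1 E2]. set (y := gmul x (iH h)) in *.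
  destruct (excluded_middle_informative (keyH x = r0)) as [X|X].
  - rewrite rho_in, (rho_in y), E2 by congruence. apply wm_letter with (S := SH); auto.
  - assert (Sx := shapeH x). assert (Sy := shapeH y). rewrite E1 in Sy.
    rewrite (rho_same x y); [rewrite wm_refl with (S := SH); auto| auto | congruence | |].
    + intros t [m D]. destruct (L_shift _ _ _ _ _ _ _ Sx Sy D) as [[m' D']|(_ & R & _)]. exists m'; auto. tauto.
    + intros t [m D]. destruct (L_shift _ _ _ _ _ _ _ Sy Sx D) as [[m' D']|(_ & R & _)]. exists m'; auto. tauto.
Qed.

Lemma K_both_in l1 l2 r : shape false r l1 -> shape false r l2 ->
  (l1 = r0 \/ exists t, l1 = inl t :: r0) -> (l2 = r0 \/ exists t, l2 = inl t :: r0) -> l1 = l2.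
Proof.
  intros [X|[s1 [T1 X]]] [Y|[s2 [T2 Y]]] I1 I2; subst; auto.
  - destruct I2 as [Y|[t Y]]; try (destruct s2; discriminate). subst r0.
    destruct I1 as [X|[t X]].
    + apply (f_equal (@length _)) in X. simpl in X. unfold P3.syl in *. lia.
    + apply (f_equal (@length _)) in X. simpl in X. unfold P3.syl in *. lia.
  - destruct I1 as [X|[t X]]; try (destruct s1; discriminate). subst r0.
    destruct I2 as [X|[t X]].
    + apply (f_equal (@length _)) in X. simpl in X. unfold P3.syl in *. lia.
    + apply (f_equal (@length _)) in X. simpl in X. unfold P3.syl in *. lia.
  - destruct I1 as [X|[t X]]; try (destruct s1; discriminate).
    destruct I2 as [Y|[t Y]]; try (destruct s2; discriminate). congruence.
Qed.

Lemma K_in_out l1 l2 r : shape false r l1 -> shape false r l2 ->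
  (l1 = r0 \/ exists t, l1 = inl t :: r0) -> ~ (l2 = r0 \/ exists t, l2 = inl t :: r0) ->
  (exists t s, l1 = inl t :: r0 /\ l2 = s :: inl t :: r0) \/ (l1 = r0 /\ forall t m, l2 <> m ++ inl t :: r0).
Proof.
  intros S1 S2 I1 I2. destruct S1 as [X|[s1 [T1 X]]]; subst l1.
  - destruct S2 as [Y|[s2 [T2 Y]]]; subst l2. tauto.
    destruct I1 as [X|[t X]].
    + subst r. right. split; auto. intros t m E. destruct m as [|a m].
      * simpl in E. injection E as E1. subst s2. simpl in T2. discriminate.
      * simpl in E. injection E as _ E. apply (f_equal (@length _)) in E. rewrite length_app in E. simpl in E. unfold P3.syl in *. lia.
    + left. exists t, s2. subst. auto.
  - destruct I1 as [X|[t X]]; [|destruct s1; discriminate]. right. split; auto.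
    intros t m E. subst r0. apply (f_equal (@length _)) in E. rewrite length_app in E. simpl in E.
    destruct S2 as [Y|[s2 [T2 Y]]]; subst l2; simpl in E; unfold P3.syl in *; lia.
Qed.

Lemma K_io x y k : y = gmul x (iK k) -> keyH x = r0 -> keyH y <> r0 -> dH (rho x) (rho y) <= 1.
Proof.
  intros Ey Ix Oy. destruct (keyK_step x k) as [E1 _]. rewrite <- Ey in E1.
  assert (Sx := shapeK x). assert (Sy := shapeK y). rewrite E1 in Sy.
  rewrite (rho_in x Ix).
  rewrite (keyH_char x r0 Nr0) in Ix. rewrite (keyH_char y r0 Nr0) in Oy.
  destruct (K_in_out _ _ _ Sx Sy Ix Oy) as [(t & s & X & Y)|(X & Y)].
  - rewrite (coH_inl x t r0 X). rewrite (rho_deep y t).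
    + replace t with (gmul (gmul t (ag x)) (ginv (ag x))) at 2 by apply mulKr.
      apply dH_A. apply AV. apply ag_A.
    + rewrite (keyH_char y r0 Nr0). auto.
    + exists [s]. auto.
  - rewrite coH_noinl by (rewrite X; auto). rewrite rho_away.
    + rewrite <- (gmulVr H (ag x)). apply dH_A. apply AV. apply ag_A.
    + rewrite (keyH_char y r0 Nr0). auto.
    + intros [t [m D]]. eapply Y; eauto.
Qed.

Lemma rho_lip_K x k : dH (rho x) (rho (gmul x (iK k))) <= 1.
Proof.
  set (y := gmul x (iK k)). assert (Ey : y = gmul x (iK k)) by auto.
  destruct (keyK_step x k) as [E1 _]. fold y in E1.
  assert (Sx := shapeK x). assert (Sy := shapeK y). rewrite E1 in Sy.
  destruct (excluded_middle_informative (keyH x = r0)) as [Ix|Ox];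
  destruct (excluded_middle_informative (keyH y = r0)) as [Iy|Oy].
  - rewrite !rho_in by auto.
    assert (R : rl x = rl y).
    { apply (K_both_in _ _ _ Sx Sy); apply keyH_char; auto. }
    rewrite (coH_rl x y R). apply dH_A. apply AM. apply AV; apply ag_A. apply ag_A.
  - apply (K_io x y k); auto.
  - rewrite dH_sym. apply (K_io y x (ginv k)); auto.
    unfold y. rewrite <- gmulA, <- HiK, gmulVr, hom_one, gmul1r; auto.
  - rewrite (rho_same x y); [rewrite wm_refl with (S := SH); auto| auto | auto | |].
    + intros t [m D]. destruct (L_shift _ _ _ _ _ _ _ Sx Sy D) as [[m' D']|(_ & R & T & _)]. exists m'; auto. discriminate.
    + intros t [m D]. destruct (L_shift _ _ _ _ _ _ _ Sy Sx D) as [[m' D']|(_ & R & T & _)]. exists m'; auto. discriminate.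
Qed.

Lemma rho_lip x y : adj x y -> dH (rho x) (rho y) <= 1.
Proof.
  intros [a [L E]]. subst y. destruct (letter_cases a L) as [[h [Sh ->]]|[k [_ ->]]].
  - apply rho_lip_H; auto.
  - apply rho_lip_K.
Qed.

Lemma rho_d x y : dH (rho x) (rho y) <= d x y.
Proof.
  destruct (wm_ex _ SG d Hd x y) as (l & W & L & P).
  enough (dH (rho x) (rho y) <= length l) by lia. clear L.
  revert x P. induction l as [|a l IH]; intros x P.
  - simpl in P. symmetry in P. apply eq_of_inv_one in P. subst. rewrite wm_refl with (S := SH); auto.
  - inversion W; subst. simpl in P.
    assert (Axx : adj x (gmul x a)) by (exists a; split; auto).
    assert (P' : word_prod l = gmul (ginv (gmul x a)) y).
    { rewrite ginv_mul, <- gmulA, <- P, mulKV. auto. }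
    pose proof (IH H3 _ P'). pose proof (rho_lip _ _ Axx).
    pose proof (wm_tri _ SH dH HdH (rho x) (rho (gmul x a)) (rho y)). simpl. lia.
Qed.
End Rho.

Lemma word_prod_map {X Y : group} (f : X -> Y) (l : list X) : is_hom f -> word_prod (map f l) = f (word_prod l).
Proof. intro Hf. induction l; simpl. symmetry. apply hom_one; auto. rewrite Hf, IHl. auto. Qed.

Lemma piece_iso x y : keyH x = keyH y -> d x y = dH (coH x) (coH y).
Proof.
  intro E. apply Nat.le_antisymm.
  - destruct (wm_ex _ SH dH HdH (coH x) (coH y)) as (l & W & L & P).
    assert (d x y <= length (map iH l)).
    { apply wm_le with (S := SG); auto.
      - unfold word_in in *. apply Forall_map. eapply Forall_impl; [|exact W]. simpl.
        intros a [Sa|Sa]; [left; left; eauto|right; left; exists (ginv a); rewrite hom_inv; auto].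
      - rewrite word_prod_map, P by auto. rewrite (keyH_eq x y E) at 2. rewrite mulKV. auto. }
    rewrite length_map in H0. lia.
  - pose proof (rho_d (keyH x) (keyH_noT x) x y). rewrite !rho_in in H0 by auto. auto.
Qed.

Lemma piece_iso_gen g h1 h2 : d (gmul g (iH h1)) (gmul g (iH h2)) = dH h1 h2.
Proof.
  rewrite piece_iso.
  - rewrite (proj2 (keyH_step g h1)), (proj2 (keyH_step g h2)). apply wm_transl with (S := SH); auto.
  - rewrite (proj1 (keyH_step g h1)), (proj1 (keyH_step g h2)). auto.
Qed.

Variables (dlH dlK : nat).
Hypotheses (FH : forall x y z w, FPs dH dlH x y z w) (FK : forall x y z w, FPs dK dlK x y z w).
Hypothesis HpK : forall g k1 k2, d (gmul g (iK k1)) (gmul g (iK k2)) = dK k1 k2.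

Lemma pieceH_FP x y z w : keyH y = keyH x -> keyH z = keyH x -> keyH w = keyH x -> FPs d dlH x y z w.
Proof.
  intros Ey Ez Ew. unfold FPs. rewrite !piece_iso by congruence. apply FH.
Qed.

Lemma pieceK_FP x y z w : keyK y = keyK x -> keyK z = keyK x -> keyK w = keyK x -> FPs d dlK x y z w.
Proof.
  intros Ey Ez Ew.
  assert (Hg : forall k0 k1 k2 k3, FPs d dlK (gmul x (iK k0)) (gmul x (iK k1)) (gmul x (iK k2)) (gmul x (iK k3))).
  { intros. unfold FPs. rewrite !HpK. apply FK. }
  specialize (Hg gone (gmul (ginv (coK x)) (coK y)) (gmul (ginv (coK x)) (coK z)) (gmul (ginv (coK x)) (coK w))).
  rewrite <- (keyK_eq x y), <- (keyK_eq x z), <- (keyK_eq x w) in Hg by congruence.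
  rewrite hom_one, gmul1r in Hg; auto.
Qed.

Definition Dr (Q : list syl) (x : G) := exists m, rl x = m ++ Q.
Definition Db (Q : list syl) (c : bool) (x : G) := Dbl Q c (rl x).
Definition Eq (Q : list syl) (x : G) := rl x = Q.

Lemma Eq_diam Q a b : Eq Q a -> Eq Q b -> d a b <= 1.
Proof.
  unfold Eq. intros Ea Eb. rewrite (rl_eq a b) by congruence. apply adj_d. eexists; split; [|reflexivity].
  left. left. eexists; split; [|reflexivity]. apply SA. apply AM. apply AV, ag_A. apply ag_A.
Qed.

Lemma sep_Dr Q : sep (Dr Q) (Eq Q).
Proof.
  split; [|apply Eq_diam]. intros x y Axy Dx Dy. left.
  destruct (adj_shape x y Axy) as (b & r & S1 & S2). apply (C1 b r _ _ Q S1 S2); auto.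
Qed.
Lemma sep_Db Q c : sep (Db Q c) (Eq Q).
Proof.
  split; [|apply Eq_diam]. intros x y Axy Dx Dy. right.
  destruct (adj_shape x y Axy) as (b & r & S1 & S2). apply (C2 b r _ _ Q c S1 S2); auto.
Qed.

Lemma Eq_ex Q x : Dr Q x -> exists c, Eq Q c.
Proof. intro D. apply (E_nonempty x Q D). Qed.

Lemma Dr_sub s Q x : Dr (s :: Q) x -> Dr Q x.
Proof. intros [m E]. exists (m ++ [s]). rewrite E, <- app_assoc. auto. Qed.

Lemma Eq_not_Dr Q s x : Eq Q x -> ~ Dr (s :: Q) x.
Proof.
  unfold Eq. intros E [m D]. rewrite E in D. apply (f_equal (@length _)) in D.
  rewrite length_app in D. simpl in D. unfold P3.syl in *. lia.
Qed.
Lemma Eq_not_Db Q c x : Eq Q x -> ~ Db Q c x.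
Proof.
  unfold Eq, Db, Dbl. intros E (m & s & T & D). rewrite E in D. apply (f_equal (@length _)) in D.
  rewrite length_app in D. simpl in D. unfold P3.syl in *. lia.
Qed.
Lemma cons_suffix (s s' : syl) Q m : s :: Q = m ++ s' :: Q -> s = s' /\ m = [].
Proof. intro E. apply (suffix_uniq [] m s s' Q) in E. destruct E; split; congruence. Qed.

Definition InP (b : bool) (Q : list syl) (x : G) := rl x = Q \/ exists s, ty s = b /\ rl x = s :: Q.

Lemma InP_keyH Q x y : InP true Q x -> InP true Q y -> keyH x = keyH y.
Proof.
  assert (KH : forall z, keyH z = match rl z with inl _ :: r => r | l => l end).
  { intro z. unfold keyH. rewrite Psi_split. destruct (rl z) as [|[t|t] r]; reflexivity. }
  assert (NQ : forall z s, ty s = true -> rl z = s :: Q -> keyH z = Q /\ noT true Q).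
  { intros z [t|t] T E; simpl in T; try discriminate. rewrite KH, E. split; auto.
    pose proof (rl_alt z) as W. rewrite E in W. destruct Q as [|q Q]; simpl in *; auto.
    destruct W as (_ & _ & W). intro; apply W; congruence. }
  intros [X|(s & T & X)] [Y|(s' & T' & Y)].
  - rewrite !KH, X, Y. auto.
  - destruct (NQ y s' T' Y) as [K1 N]. rewrite K1, KH, X. destruct Q as [|[q|q] Q]; simpl in *; auto. congruence.
  - destruct (NQ x s T X) as [K1 N]. rewrite K1, (KH y), Y. destruct Q as [|[q|q] Q]; simpl in *; auto. congruence.
  - rewrite (proj1 (NQ x s T X)), (proj1 (NQ y s' T' Y)). auto.
Qed.

Lemma InP_keyK Q x y : InP false Q x -> InP false Q y -> keyK x = keyK y.
Proof.
  assert (KH : forall z, keyK z = match rl z with inr _ :: r => r | l => l end).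
  { intro z. unfold keyK. rewrite Psi_split. destruct (rl z) as [|[t|t] r]; reflexivity. }
  assert (NQ : forall z s, ty s = false -> rl z = s :: Q -> keyK z = Q /\ noT false Q).
  { intros z [t|t] T E; simpl in T; try discriminate. rewrite KH, E. split; auto.
    pose proof (rl_alt z) as W. rewrite E in W. destruct Q as [|q Q]; simpl in *; auto.
    destruct W as (_ & _ & W). intro; apply W; congruence. }
  intros [X|(s & T & X)] [Y|(s' & T' & Y)].
  - rewrite !KH, X, Y. auto.
  - destruct (NQ y s' T' Y) as [K1 N]. rewrite K1, KH, X. destruct Q as [|[q|q] Q]; simpl in *; auto. congruence.
  - destruct (NQ x s T X) as [K1 N]. rewrite K1, (KH y), Y. destruct Q as [|[q|q] Q]; simpl in *; auto. congruence.
  - rewrite (proj1 (NQ x s T X)), (proj1 (NQ y s' T' Y)). auto.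
Qed.

Definition Asg (b : bool) (Q : list syl) (p p' : G) (R : G -> Prop) : Prop :=
  (p' = p /\ (forall z, ~ R z) /\ InP b Q p)
  \/ (exists s m, ty s = b /\ m <> [] /\ rl p = m ++ s :: Q /\ (forall z, R z <-> Dr (s :: Q) z) /\ rl p' = s :: Q)
  \/ (Db Q (negb b) p /\ (forall z, R z <-> Db Q (negb b) z) /\ rl p' = Q).

Lemma asg_exists b Q p : Dr Q p -> exists p' R, Asg b Q p p' R.
Proof.
  intros [m E]. destruct m as [|a m0].
  - exists p, (fun _ => False). left. split; auto. split; auto. left. auto.
  - destruct (exists_last (l := a :: m0) ltac:(discriminate)) as (m1 & s & Em). rewrite Em, <- app_assoc in E.
    simpl in E. destruct (Bool.bool_dec (ty s) b) as [T|T].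
    + destruct m1 as [|a1 m1].
      * exists p, (fun _ => False). left. split; auto. split; auto. right. exists s. auto.
      * destruct (Eq_ex (s :: Q) p) as [c Ec]. exists (a1 :: m1); auto.
        exists c, (Dr (s :: Q)). right. left. exists s, (a1 :: m1). repeat split; auto; discriminate.
    + destruct (Eq_ex Q p) as [c Ec]. exists (m1 ++ [s]). rewrite <- app_assoc. auto.
      exists c, (Db Q (negb b)). right. right. split; [|split; [tauto|auto]].
      exists m1, s. split; auto. destruct b, (ty s); simpl in *; congruence.
Qed.

Lemma asg_InP b Q p p' R : Asg b Q p p' R -> InP b Q p'.
Proof.
  intros [(X & _ & I)|[(s & m & T & N & E & R' & E')|(_ & _ & E')]].
  - subst. auto. - right. exists s. auto. - left. auto.
Qed.

Lemma asg_proj b Q p p' R : Asg b Q p p' R -> p' = p \/ (R p /\ exists E, sep R E /\ E p').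
Proof.
  intros [(X & _ & I)|[(s & m & T & N & E & R' & E')|(D & R' & E')]]; auto; right.
  - split. apply R'. exists m. auto. exists (Eq (s :: Q)). split; auto.
    destruct (sep_Dr (s :: Q)) as [S1 S2]. split; auto. intros x y Axy Rx Ry. apply S1; auto.
    apply R'; auto. rewrite <- R'; auto.
  - split. apply R'. auto. exists (Eq Q). split; auto.
    destruct (sep_Db Q (negb b)) as [S1 S2]. split; auto. intros x y Axy Rx Ry. apply S1; auto.
    apply R'; auto. rewrite <- R'; auto.
Qed.

Lemma asg_disj b Q pi pi' Ri pj pj' Rj : Asg b Q pi pi' Ri -> Asg b Q pj pj' Rj ->
  (forall s, ~ (Dr (s :: Q) pi /\ Dr (s :: Q) pj)) -> ~ (Db Q (negb b) pi /\ Db Q (negb b) pj) ->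
  ~ Ri pj /\ ~ Ri pj'.
Proof.
  intros Ai Aj NP NB.
  destruct Ai as [(X & R0 & I)|[(s & m & T & N & E & R' & E')|(D & R' & E')]].
  - auto.
  - assert (Dpi : Dr (s :: Q) pi) by (exists m; auto).
    split; rewrite R'. { intro; eapply NP; eauto. }
    destruct Aj as [(X & _ & I)|[(s2 & m2 & T2 & N2 & E2 & R2 & E2')|(D2 & R2 & E2')]].
    + subst. intro; eapply NP; eauto.
    + intros [m3 D3]. rewrite E2' in D3. destruct (cons_suffix _ _ _ _ D3) as [-> ->].
      apply (NP s). split; auto. exists m2. auto.
    + apply Eq_not_Dr. auto.
  - split; rewrite R'. { intro; apply NB; auto. }
    destruct Aj as [(X & _ & I)|[(s2 & m2 & T2 & N2 & E2 & R2 & E2')|(D2 & R2 & E2')]].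
    + subst. intro; apply NB; auto.
    + intros (m3 & s3 & T3 & D3). rewrite E2' in D3. destruct (cons_suffix _ _ _ _ D3) as [-> ->].
      destruct b, (ty s3); simpl in *; congruence.
    + apply Eq_not_Db. auto.
Qed.

Lemma proj_gen p p' R q1 q2 q3 dl : (p' = p \/ (R p /\ exists E, sep R E /\ E p')) ->
  ~ R q1 -> ~ R q2 -> ~ R q3 -> FPs d dl p' q1 q2 q3 -> FPs d (dl + 2) p q1 q2 q3.
Proof.
  intros [->|(Rp & E & S & Ep)] N1 N2 N3 F.
  - eapply FPs_mono; [|exact F]. lia.
  - eapply proj_pt; eauto.
Qed.

Ltac perm12 := apply (FPs_12 d dsym).
Ltac perm23 := apply (FPs_23 d dsym).
Ltac perm34 := apply (FPs_34 d dsym).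

Definition AtMostOne (D : G -> Prop) (x y z w : G) : Prop :=
  ~ (D x /\ D y) /\ ~ (D x /\ D z) /\ ~ (D x /\ D w) /\ ~ (D y /\ D z) /\ ~ (D y /\ D w) /\ ~ (D z /\ D w).

Lemma piece_case b Q x y z w : Dr Q x -> Dr Q y -> Dr Q z -> Dr Q w ->
  (forall s, AtMostOne (Dr (s :: Q)) x y z w) -> AtMostOne (Db Q (negb b)) x y z w ->
  FPs d ((if b then dlH else dlK) + 8) x y z w.
Proof.
  intros Dx Dy Dz Dw NP NB.
  destruct (asg_exists b Q x Dx) as (x' & Rx & Ax).
  destruct (asg_exists b Q y Dy) as (y' & Ry & Ay).
  destruct (asg_exists b Q z Dz) as (z' & Rz & Az).
  destruct (asg_exists b Q w Dw) as (w' & Rw & Aw).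
  assert (F0 : FPs d (if b then dlH else dlK) x' y' z' w').
  { pose proof (asg_InP _ _ _ _ _ Ax). pose proof (asg_InP _ _ _ _ _ Ay).
    pose proof (asg_InP _ _ _ _ _ Az). pose proof (asg_InP _ _ _ _ _ Aw).
    destruct b.
    - apply pieceH_FP; apply (InP_keyH Q); auto.
    - apply pieceK_FP; apply (InP_keyK Q); auto. }
  set (dl := if b then dlH else dlK) in *.
  assert (Dj : forall pi pi' Ri pj pj' Rj, Asg b Q pi pi' Ri -> Asg b Q pj pj' Rj ->
     (forall s, ~ (Dr (s :: Q) pi /\ Dr (s :: Q) pj)) -> ~ (Db Q (negb b) pi /\ Db Q (negb b) pj) ->
     ~ Ri pj /\ ~ Ri pj') by (intros; eapply asg_disj; eauto).
  destruct NB as (B1' & B2' & B3' & B4' & B5' & B6').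
  assert (P : forall s, ~ (Dr (s :: Q) x /\ Dr (s :: Q) y) /\ ~ (Dr (s :: Q) x /\ Dr (s :: Q) z) /\
     ~ (Dr (s :: Q) x /\ Dr (s :: Q) w) /\ ~ (Dr (s :: Q) y /\ Dr (s :: Q) z) /\
     ~ (Dr (s :: Q) y /\ Dr (s :: Q) w) /\ ~ (Dr (s :: Q) z /\ Dr (s :: Q) w)) by apply NP.
  assert (Sym : forall (D : G -> Prop) a c, ~ (D a /\ D c) -> ~ (D c /\ D a)) by tauto.
  destruct (Dj _ _ _ _ _ _ Ax Ay) as [Nxy Nxy']; [intro s; apply P|auto|].
  destruct (Dj _ _ _ _ _ _ Ax Az) as [Nxz Nxz']; [intro s; apply P|auto|].
  destruct (Dj _ _ _ _ _ _ Ax Aw) as [Nxw Nxw']; [intro s; apply P|auto|].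
  destruct (Dj _ _ _ _ _ _ Ay Ax) as [Nyx Nyx']; [intro s; apply Sym, P|apply Sym; auto|].
  destruct (Dj _ _ _ _ _ _ Ay Az) as [Nyz Nyz']; [intro s; apply P|auto|].
  destruct (Dj _ _ _ _ _ _ Ay Aw) as [Nyw Nyw']; [intro s; apply P|auto|].
  destruct (Dj _ _ _ _ _ _ Az Ax) as [Nzx Nzx']; [intro s; apply Sym, P|apply Sym; auto|].
  destruct (Dj _ _ _ _ _ _ Az Ay) as [Nzy Nzy']; [intro s; apply Sym, P|apply Sym; auto|].
  destruct (Dj _ _ _ _ _ _ Az Aw) as [Nzw Nzw']; [intro s; apply P|auto|].
  destruct (Dj _ _ _ _ _ _ Aw Ax) as [Nwx Nwx']; [intro s; apply Sym, P|apply Sym; auto|].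
  destruct (Dj _ _ _ _ _ _ Aw Ay) as [Nwy Nwy']; [intro s; apply Sym, P|apply Sym; auto|].
  destruct (Dj _ _ _ _ _ _ Aw Az) as [Nwz Nwz']; [intro s; apply Sym, P|apply Sym; auto|].
  apply asg_proj in Ax. apply asg_proj in Ay. apply asg_proj in Az. apply asg_proj in Aw.
  replace (dl + 8) with (dl + 2 + 2 + 2 + 2) by lia.
  assert (F1 : FPs d (dl + 2) x y' z' w') by (eapply proj_gen; eauto).
  assert (F2 : FPs d (dl + 2 + 2) y x z' w') by (eapply proj_gen; eauto; perm12; auto).
  assert (F3 : FPs d (dl + 2 + 2 + 2) z x y w').
  { eapply proj_gen; eauto. perm12. perm23. perm12. auto. }
  assert (F4 : FPs d (dl + 2 + 2 + 2 + 2) w x y z).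
  { eapply proj_gen; eauto. perm12. perm23. perm34. perm23. perm12. auto. }
  perm34. perm23. perm12. auto.
Qed.

Ltac ps n := first [assumption | match n with S ?m => first [perm12; ps m | perm23; ps m | perm34; ps m] end].

Definition Split2 (D : G -> Prop) (x y z w : G) : Prop :=
  (D x /\ D y /\ ~ D z /\ ~ D w) \/ (D x /\ D z /\ ~ D y /\ ~ D w) \/ (D x /\ D w /\ ~ D y /\ ~ D z) \/
  (~ D x /\ ~ D y /\ D z /\ D w) \/ (~ D x /\ ~ D z /\ D y /\ D w) \/ (~ D x /\ ~ D w /\ D y /\ D z).

Definition NoTriple (D : G -> Prop) (x y z w : G) : Prop :=
  ~ (D x /\ D y /\ D z) /\ ~ (D x /\ D y /\ D w) /\ ~ (D x /\ D z /\ D w) /\ ~ (D y /\ D z /\ D w).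

Lemma split_FP D E x y z w : sep D E -> (exists c, E c) -> Split2 D x y z w -> FPs d 4 x y z w.
Proof.
  intros S [c Ec] Sp. pose proof (sep_compl D E S) as S'.
  destruct Sp as [(A1' & A2' & A3' & A4')|[(A1' & A2' & A3' & A4')|[(A1' & A2' & A3' & A4')|
    [(A1' & A2' & A3' & A4')|[(A1' & A2' & A3' & A4')|(A1' & A2' & A3' & A4')]]]]].
  - eapply (split4 D); eauto.
  - assert (F : FPs d 4 x z y w) by (eapply (split4 D); eauto). ps 6.
  - assert (F : FPs d 4 x w y z) by (eapply (split4 D); eauto). ps 6.
  - assert (F : FPs d 4 x y z w) by (eapply (split4 (fun p => ~ D p)); [exact S'|exact Ec|..]; cbv beta; tauto). ps 6.
  - assert (F : FPs d 4 x z y w) by (eapply (split4 (fun p => ~ D p)); [exact S'|exact Ec|..]; cbv beta; tauto). ps 6.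
  - assert (F : FPs d 4 x w y z) by (eapply (split4 (fun p => ~ D p)); [exact S'|exact Ec|..]; cbv beta; tauto). ps 6.
Qed.

Lemma logic_split (a b c e : Prop) :
  ~ (a /\ b /\ c) -> ~ (a /\ b /\ e) -> ~ (a /\ c /\ e) -> ~ (b /\ c /\ e) ->
  (~ (a /\ b) /\ ~ (a /\ c) /\ ~ (a /\ e) /\ ~ (b /\ c) /\ ~ (b /\ e) /\ ~ (c /\ e)) \/
  ((a /\ b /\ ~ c /\ ~ e) \/ (a /\ c /\ ~ b /\ ~ e) \/ (a /\ e /\ ~ b /\ ~ c) \/
   (~ a /\ ~ b /\ c /\ e) \/ (~ a /\ ~ c /\ b /\ e) \/ (~ a /\ ~ e /\ b /\ c)).
Proof.
  intros. destruct (classic a), (classic b), (classic c), (classic e); tauto.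
Qed.

Lemma logic_TF (a b c e a' b' c' e' : Prop) :
  ~ (a /\ a') -> ~ (b /\ b') -> ~ (c /\ c') -> ~ (e /\ e') ->
  ~ (~ (a' /\ b') /\ ~ (a' /\ c') /\ ~ (a' /\ e') /\ ~ (b' /\ c') /\ ~ (b' /\ e') /\ ~ (c' /\ e')) ->
  ~ (~ (a /\ b) /\ ~ (a /\ c) /\ ~ (a /\ e) /\ ~ (b /\ c) /\ ~ (b /\ e) /\ ~ (c /\ e)) ->
  ((a /\ b /\ ~ c /\ ~ e) \/ (a /\ c /\ ~ b /\ ~ e) \/ (a /\ e /\ ~ b /\ ~ c) \/
   (~ a /\ ~ b /\ c /\ e) \/ (~ a /\ ~ c /\ b /\ e) \/ (~ a /\ ~ e /\ b /\ c)).
Proof.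
  intros. destruct (classic a), (classic b), (classic c), (classic e); try tauto;
  destruct (classic a'), (classic b'), (classic c'), (classic e'); tauto.
Qed.

Definition dl1 := 4 + dlH + dlK + 8.

Lemma AtBranch Q x y z w : Dr Q x -> Dr Q y -> Dr Q z -> Dr Q w ->
  (forall s, NoTriple (Dr (s :: Q)) x y z w) -> FPs d dl1 x y z w.
Proof.
  intros Dx Dy Dz Dw NT. unfold dl1.
  destruct (classic (exists s, ~ AtMostOne (Dr (s :: Q)) x y z w)) as [[s N]|N].
  - destruct (NT s) as (T1 & T2 & T3 & T4).
    destruct (logic_split _ _ _ _ T1 T2 T3 T4) as [X|X]; [unfold AtMostOne in N; tauto|].
    eapply FPs_mono; [|eapply (split_FP (Dr (s :: Q)) (Eq (s :: Q))); eauto using sep_Dr].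
    lia. unfold AtMostOne in N.
    destruct (classic (Dr (s :: Q) x)) as [X1|X1]; [eauto using Eq_ex|].
    destruct (classic (Dr (s :: Q) y)) as [X2|X2]; [eauto using Eq_ex|].
    destruct (classic (Dr (s :: Q) z)) as [X3|X3]; [eauto using Eq_ex|]. tauto.
  - assert (NP : forall s, AtMostOne (Dr (s :: Q)) x y z w).
    { intro s. destruct (classic (AtMostOne (Dr (s :: Q)) x y z w)); auto. exfalso; eauto. }
    destruct (classic (AtMostOne (Db Q false) x y z w)) as [M1|M1].
    + eapply FPs_mono; [|apply (piece_case true Q); auto]. lia.
    + destruct (classic (AtMostOne (Db Q true) x y z w)) as [M2|M2].
      * eapply FPs_mono; [|apply (piece_case false Q); auto]. lia.
      * assert (Dis : forall p, ~ (Db Q true p /\ Db Q false p)).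
        { intros p [(m & s & T & E) (m' & s' & T' & E')]. rewrite E in E'.
          apply suffix_uniq in E'. destruct E' as [-> _]. congruence. }
        eapply FPs_mono; [|eapply (split_FP (Db Q true) (Eq Q)); eauto using sep_Db].
        lia. eauto using Eq_ex. unfold AtMostOne in *. apply logic_TF with (Db Q false x) (Db Q false y) (Db Q false z) (Db Q false w); auto.
Qed.

Lemma Dr_len Q x : Dr Q x -> length Q <= length (rl x).
Proof. intros [m E]. rewrite E, length_app. lia. Qed.

Lemma Lemma3 n : forall Q x y z w, length (rl x) - length Q <= n -> Dr Q x -> Dr Q y -> Dr Q z -> ~ Dr Q w ->
  FPs d (dl1 + 2) w x y z.
Proof.
  induction n as [|n IH]; intros Q x y z w L Dx Dy Dz Dw.
  all: destruct (classic (exists s, Dr (s :: Q) x /\ Dr (s :: Q) y /\ Dr (s :: Q) z)) as [[s (X & Y & Z)]|N].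
  - pose proof (Dr_len _ _ X). simpl in H0. lia.
  - destruct (Eq_ex Q x Dx) as [c Ec].
    eapply (proj_pt' (Dr Q) (Eq Q) c); eauto using sep_Dr.
    apply (AtBranch Q); auto. exists []. auto.
    intro s. unfold NoTriple. pose proof (Eq_not_Dr Q s c Ec). split; [|split; [|split]]; try tauto.
    intro; apply N; eauto.
  - apply (IH (s :: Q)); auto. pose proof (Dr_len _ _ X). simpl in *. lia.
    intro D; apply Dw; eapply Dr_sub; eauto.
  - destruct (Eq_ex Q x Dx) as [c Ec].
    eapply (proj_pt' (Dr Q) (Eq Q) c); eauto using sep_Dr.
    apply (AtBranch Q); auto. exists []. auto.
    intro s. unfold NoTriple. pose proof (Eq_not_Dr Q s c Ec). split; [|split; [|split]]; try tauto.
    intro; apply N; eauto.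
Qed.

Lemma MainL n : forall Q x y z w, length (rl x) - length Q <= n -> Dr Q x -> Dr Q y -> Dr Q z -> Dr Q w ->
  FPs d (dl1 + 2) x y z w.
Proof.
  induction n as [|n IH]; intros Q x y z w L Dx Dy Dz Dw.
  all: destruct (classic (exists s, Dr (s :: Q) x /\ Dr (s :: Q) y /\ Dr (s :: Q) z /\ Dr (s :: Q) w)) as [[s (X & Y & Z & W)]|N4].
  1: pose proof (Dr_len _ _ X); simpl in *; lia.
  2: apply (IH (s :: Q)); auto; pose proof (Dr_len _ _ X); simpl in *; lia.
  all: destruct (classic (exists s, ~ NoTriple (Dr (s :: Q)) x y z w)) as [[s NT]|NT].
  2, 4: eapply FPs_mono; [|apply (AtBranch Q); auto]; [lia|];
        intro s; destruct (classic (NoTriple (Dr (s :: Q)) x y z w)); auto; exfalso; eauto.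
  all: unfold NoTriple in NT; destruct (classic (Dr (s :: Q) x)) as [X|X];
       destruct (classic (Dr (s :: Q) y)) as [Y|Y]; destruct (classic (Dr (s :: Q) z)) as [Z|Z];
       destruct (classic (Dr (s :: Q) w)) as [W|W]; try (exfalso; apply N4; eauto; fail); try tauto.
  all: pose proof (Dr_len _ _ Dx); pose proof (Dr_len _ _ Dy); pose proof (Dr_len _ _ Dz); pose proof (Dr_len _ _ Dw).
  all: try (assert (F : FPs d (dl1 + 2) w x y z) by (apply (Lemma3 (length (rl x) - length (s :: Q)) (s :: Q)); auto); ps 6).
  all: try (assert (F : FPs d (dl1 + 2) z x y w) by (apply (Lemma3 (length (rl x) - length (s :: Q)) (s :: Q)); auto); ps 6).
  all: try (assert (F : FPs d (dl1 + 2) y x z w) by (apply (Lemma3 (length (rl x) - length (s :: Q)) (s :: Q)); auto); ps 6).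
  all: try (assert (F : FPs d (dl1 + 2) x y z w) by (apply (Lemma3 (length (rl y) - length (s :: Q)) (s :: Q)); auto); ps 6).
Qed.

Lemma G_hyp : gromov_hyperbolic d.
Proof.
  apply (FPs_gromov d dsym (dl1 + 2)). intros x y z w.
  assert (D0 : forall p, Dr [] p) by (intro p; exists (rl p); rewrite app_nil_r; auto).
  apply (MainL (length (rl x)) []); auto. lia.
Qed.

End Core.

End P5.
Import P5.

Module P6.

Section Assemble.
Variables (H K G : group) (A : H -> Prop) (B : K -> Prop) (phi : H -> K) (iH : H -> G) (iK : K -> G).
Hypotheses (HA : is_subgroup A) (HB : is_subgroup B) (Hphi : is_iso_on A B phi) (Ham : is_amalgam A phi iH iK).

Lemma get_u : exists u : G -> SymG (Om H K A B), is_hom u /\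
  (forall h, u (iH h) = permH H K A B HA h) /\ (forall k, u (iK k) = permK H K A B phi HB Hphi k).
Proof.
  destruct Ham as (_ & _ & _ & U).
  destruct (U (SymG (Om H K A B)) (permH H K A B HA) (permK H K A B phi HB Hphi)) as (u & Hu & E1 & E2 & _).
  apply permH_hom. apply permK_hom. intros a Aa. apply perm_agree; auto.
  exists u. auto.
Qed.

Lemma piece_H SH SK dH d : word_metric SH dH -> (forall a, A a -> SH a) ->
  word_metric (SG H K G iH iK SH SK) d -> forall g h1 h2, d (gmul g (iH h1)) (gmul g (iH h2)) = dH h1 h2.
Proof.
  intros. destruct get_u as (u & Hu & E1 & E2). eapply piece_iso_gen; eauto.
Qed.
End Assemble.

Lemma piece_K (H K G : group) (A : H -> Prop) (B : K -> Prop) (phi : H -> K) (iH : H -> G) (iK : K -> G)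
  (HA : is_subgroup A) (HB : is_subgroup B) (Hphi : is_iso_on A B phi) (Ham : is_amalgam A phi iH iK)
  SH SK dK d : word_metric SK dK -> (forall b, B b -> SK b) ->
  word_metric (SG H K G iH iK SH SK) d -> forall g k1 k2, d (gmul g (iK k1)) (gmul g (iK k2)) = dK k1 k2.
Proof.
  intros HdK SB Hd. apply (piece_H K H G B A (phiinv H K A phi) iK iH HB HA (iso_swap H K A B phi HA Hphi)
    (amalgam_swap H K G A B phi iH iK Hphi Ham) SK SH dK d); auto.
  eapply wm_ext; [|exact Hd]. intro a. unfold SG. tauto.
Qed.

Lemma main_lemma (H K G : group) (A : H -> Prop) (B : K -> Prop) (phi : H -> K) (iH : H -> G) (iK : K -> G)
  (HA : is_subgroup A) (HB : is_subgroup B) (Hphi : is_iso_on A B phi) (Ham : is_amalgam A phi iH iK)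
  SH SK dH dK d : word_metric SH dH -> word_metric SK dK -> (forall a, A a -> SH a) -> (forall b, B b -> SK b) ->
  gromov_hyperbolic dH -> gromov_hyperbolic dK ->
  word_metric (SG H K G iH iK SH SK) d -> gromov_hyperbolic d.
Proof.
  intros HdH HdK SA SB GH GK Hd.
  destruct (gromov_FPs dH (wm_sym H SH dH HdH) GH) as [dlH FH].
  destruct (gromov_FPs dK (wm_sym K SK dK HdK) GK) as [dlK FK].
  destruct (get_u H K G A B phi iH iK HA HB Hphi Ham) as (u & Hu & E1 & E2).
  eapply (G_hyp H K G A B phi iH iK HA HB Hphi Ham u Hu E1 E2 SH SK dH dK d HdH SA Hd dlH dlK FH FK).
  apply (piece_K H K G A B phi iH iK HA HB Hphi Ham SH SK dK d); auto.
Qed.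

Lemma nat_min (P : nat -> Prop) n : P n -> exists m, P m /\ forall k, P k -> m <= k.
Proof.
  revert P. induction n as [n IH] using (well_founded_induction Wf_nat.lt_wf). intros P Pn.
  destruct (classic (exists k, P k /\ k < n)) as [[k [Pk Lk]]|N].
  - exact (IH k Lk P Pk).
  - exists n. split; auto. intros k Pk. destruct (Nat.le_gt_cases n k); auto. exfalso; eauto.
Qed.

Lemma wm_exists {G : group} (S : G -> Prop) : generates S -> exists d, word_metric S d.
Proof.
  intro Gen.
  set (P := fun (g h : G) n => exists l, word_in S l /\ length l = n /\ word_prod l = gmul (ginv g) h).
  assert (Ex : forall g h, exists m, P g h m /\ forall k, P g h k -> m <= k).
  { intros g h. destruct (Gen (gmul (ginv g) h)) as [l [W E]]. apply (nat_min _ (length l)). exists l. auto. }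
  exists (fun g h => epsilon (inhabits 0) (fun m => P g h m /\ forall k, P g h k -> m <= k)).
  intros g h n. pose proof (epsilon_spec (inhabits 0) _ (Ex g h)) as [[l (W & L & E)] M].
  split.
  - intro Le. exists l. split; auto. split; auto. lia.
  - intros (l' & W' & L' & E'). assert (P g h (length l')) by (exists l'; auto). specialize (M _ H). lia.
Qed.

Lemma gen_transfer {G : group} (S S' : G -> Prop) : generates S' ->
  (forall a, S' a -> exists l, word_in S l /\ word_prod l = a) -> generates S.
Proof.
  intros Gen T g. destruct (Gen g) as [l [W E]]. subst g. induction l as [|a l IH].
  - exists []. split; auto. constructor.
  - inversion W; subst. destruct (IH H2) as [l2 [W2 E2]].
    assert (La : exists l1, word_in S l1 /\ word_prod l1 = a).
    { destruct H1 as [X|X]. auto. destruct (T _ X) as [l1 [W1 E1]]. exists (rev (map ginv l1)). split.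
      apply word_in_inv; auto. rewrite word_prod_inv, E1, ginv_ginv. auto. }
    destruct La as [l1 [W1 E1]]. exists (l1 ++ l2). split. apply Forall_app; auto.
    rewrite word_prod_app. simpl. congruence.
Qed.

Lemma word_in_map {X Y : group} (f : X -> Y) (S : X -> Prop) (S' : Y -> Prop) l : is_hom f ->
  (forall x, S x -> S' (f x)) -> word_in S l -> word_in S' (map f l).
Proof.
  intros Hf T W. unfold word_in in *. apply Forall_map. eapply Forall_impl; [|exact W]. simpl.
  intros a [Xa|Xa]; [left; auto|right; rewrite <- hom_inv; auto].
Qed.

Lemma word_prod_map' {X Y : group} (f : X -> Y) (l : list X) : is_hom f -> word_prod (map f l) = f (word_prod l).
Proof. intro Hf. induction l; simpl. symmetry. apply hom_one; auto. rewrite Hf, IHl. auto. Qed.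

Lemma discrete_FP {G : group} (d : G -> G -> nat) : word_metric (fun _ => True) d -> gromov_hyperbolic d.
Proof.
  intro Hd. assert (B1 : forall x y, d x y <= 1).
  { intros x y. replace y with (gmul x (gmul (ginv x) y)) by apply mulVK. apply wm_letter with (S := fun _ => True); auto. }
  apply (FPs_gromov d (wm_sym G _ d Hd) 2). intros x y z w. unfold FPs.
  pose proof (B1 x y). pose proof (B1 z w). pose proof (B1 x z). pose proof (B1 y w). pose proof (B1 x w). pose proof (B1 y z). lia.
Qed.

End P6.
Import P6.

Theorem theorem1p2 (H K G : group) (A : H -> Prop) (B : K -> Prop)
    (phi : H -> K) (iH : H -> G) (iK : K -> G) :
  is_subgroup A -> is_subgroup B -> is_iso_on A B phi ->
  is_amalgam A phi iH iK ->
  weakly_hyperbolic G [image iH (fun _ => True); image iK (fun _ => True)] /\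
  (weakly_hyperbolic H [A] -> weakly_hyperbolic K [B] ->
   weakly_hyperbolic G [image iH A]).
Proof.
  intros HA HB Hphi Ham.
  pose proof Ham as (HiH & HiK & Hc & _).
  split.
  - exists []. cbv zeta.
    set (S := fun x : G => In x [] \/ Exists (fun P : G -> Prop => P x) [image iH (fun _ => True); image iK (fun _ => True)]).
    assert (SE : forall x, SG H K G iH iK (fun _ => True) (fun _ => True) x <-> S x).
    { intro x. unfold SG, S, image. split.
      - intros [[h [_ E]]|[k [_ E]]]; right; [constructor|apply Exists_cons_tl; constructor]; eauto.
      - intros [[]|X]. inversion X; subst. destruct H1 as [h [_ E]]. left; eauto.
        inversion H1; subst. destruct H2 as [k [_ E]]. right; eauto. inversion H2. }
    assert (Gen : generates S).
    { apply (gen_transfer S (Im H K G iH iK)).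
      - intro g. apply (gen_images H K G A phi iH iK Ham).
      - intros a Ia. exists [a]. split. constructor; [left; apply SE|constructor].
        destruct Ia as [[h E]|[k E]]; [left|right]; eauto. simpl. apply gmul1r. }
    split; auto. destruct (wm_exists S Gen) as [d Hd]. exists d. split; auto.
    destruct (wm_exists (fun _ : H => True)) as [dH HdH]. { intro g. exists [g]. split. constructor; auto. simpl. apply gmul1r. }
    destruct (wm_exists (fun _ : K => True)) as [dK HdK]. { intro g. exists [g]. split. constructor; auto. simpl. apply gmul1r. }
    apply (main_lemma H K G A B phi iH iK HA HB Hphi Ham (fun _ => True) (fun _ => True) dH dK d); auto.
    apply discrete_FP; auto. apply discrete_FP; auto.
    eapply wm_ext; [|exact Hd]. intro a. rewrite SE. tauto.
  - intros [XH [GenH [dH [HdH GH]]]] [XK [GenK [dK [HdK GK]]]]. cbv zeta in *.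
    set (SH := fun x : H => In x XH \/ Exists (fun P : H -> Prop => P x) [A]) in *.
    set (SK := fun x : K => In x XK \/ Exists (fun P : K -> Prop => P x) [B]) in *.
    exists (map iH XH ++ map iK XK). cbv zeta.
    set (S := fun x : G => In x (map iH XH ++ map iK XK) \/ Exists (fun P : G -> Prop => P x) [image iH A]).
    assert (SE : forall x, SG H K G iH iK SH SK x <-> S x).
    { intro x. unfold SG, S, SH, SK, image. split.
      - intros [[h [Sh E]]|[k [Sk E]]]; subst x.
        + destruct Sh as [I|X]. left. apply in_or_app. left. apply in_map. auto.
          inversion X; subst. right. constructor. eauto. inversion H1.
        + destruct Sk as [I|X]. left. apply in_or_app. right. apply in_map. auto.
          inversion X; subst. 2: inversion H1. right. constructor.
          destruct (phiinv_spec H K A B phi Hphi k H1) as [Y E]. exists (phiinv H K A phi k). split; auto.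
          rewrite Hc, E; auto.
      - intros [I|X].
        + apply in_app_or in I. destruct I as [I|I]; apply in_map_iff in I; destruct I as [y [E I]].
          left. exists y. split; auto. right. exists y. split; auto.
        + inversion X; subst. 2: inversion H1. destruct H1 as [a [Aa E]]. left. exists a. split; [right; constructor; auto|auto]. }
    assert (Gen : generates S).
    { apply (gen_transfer S (Im H K G iH iK)).
      - intro g. apply (gen_images H K G A phi iH iK Ham).
      - intros a [[h E]|[k E]]; subst a.
        + destruct (GenH h) as [l [W E]]. exists (map iH l). split.
          * apply (word_in_map iH SH S); auto. intros x Sx. apply SE. left. eauto.
          * rewrite word_prod_map', E; auto.
        + destruct (GenK k) as [l [W E]]. exists (map iK l). split.
          * apply (word_in_map iK SK S); auto. intros x Sx. apply SE. right. eauto.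
          * rewrite word_prod_map', E; auto. }
    split; auto. destruct (wm_exists S Gen) as [d Hd]. exists d. split; auto.
    apply (main_lemma H K G A B phi iH iK HA HB Hphi Ham SH SK dH dK d); auto.
    + intros a Aa. right. constructor. auto.
    + intros b Bb. right. constructor. auto.
    + eapply wm_ext; [|exact Hd]. intro a. rewrite SE. tauto.
Qed.
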